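(* Let $0<|q|<1$ and let $x,y,u,v,t$ be complex numbers with $|t|<1$, $|xt|<1$, $|ut|<1$, $|uxt|<1$. Then $$\sum_{n=0}^\infty h_n(x,y|q)\,h_n(u,v|q)\,\frac{t^n}{(q;q)_n}=\frac{(yt,vxt;q)_\infty}{(t,xt,uxt;q)_\infty}\ {}_3\phi_2\left(\begin{array}{c} y,\ xt,\ v/u\\ yt,\ vxt\end{array}; q,\ ut\right).$$
   Context: Throughout $|q|<1$. The $q$-shifted factorials are $(a;q)_0=1$, $(a;q)_n=\prod_{k=0}^{n-1}(1-aq^k)$, $(a;q)_\infty=\prod_{k=0}^\infty(1-aq^k)$, and $(a_1,\dots,a_m;q)_n=(a_1;q)_n\cdots(a_m;q)_n$ (similarly for $n=\infty$). The Gaussian coefficient is ${n\brack k}=\frac{(q;q)_n}{(q;q)_k(q;q)_{n-k}}$. The basic hypergeometric series is ${}_{r+1}\phi_r\left(\begin{array}{c}a_1,\dots,a_{r+1}\\ b_1,\dots,b_r\end{array};q,z\right)=\sum_{n\ge0}\frac{(a_1,\dots,a_{r+1};q)_n}{(q,b_1,\dots,b_r;q)_n}z^n$. The Cauchy polynomials are $P_n(x,y)=(x-y)(x-qy)\cdots(x-q^{n-1}y)$ (with $P_0=1$), and the bivariate Rogers–Szegő polynomials are $h_n(x,y|q)=\sum_{k=0}^n {n\brack k}P_k(x,y)$. *)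

(* Defs.v *)
From Stdlib Require Import Reals.
From Coquelicot Require Import Coquelicot.
Open Scope C_scope.

Fixpoint csum (n : nat) (f : nat -> C) : C :=
  match n with O => RtoC 0 | S m => csum m f + f m end.
Fixpoint cprod (n : nat) (f : nat -> C) : C :=
  match n with O => RtoC 1 | S m => cprod m f * f m end.

Definition qpoch (a q : C) (n : nat) : C :=
  cprod n (fun k => RtoC 1 - a * Cpow q k).

Definition is_qpoch_inf (a q P : C) : Prop :=
  filterlim (fun n => qpoch a q n) eventually (locally P).

Definition qbinom (q : C) (n k : nat) : C :=
  qpoch q q n / (qpoch q q k * qpoch q q (n - k)).

Definition cauchyP (q x y : C) (n : nat) : C :=
  cprod n (fun j => x - Cpow q j * y).

Definition hRS (q x y : C) (n : nat) : C :=
  csum (S n) (fun k => qbinom q n k * cauchyP q x y k).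

Definition phi32_term (a1 a2 a3 b1 b2 q z : C) (n : nat) : C :=
  qpoch a1 q n * qpoch a2 q n * qpoch a3 q n
  / (qpoch q q n * qpoch b1 q n * qpoch b2 q n) * Cpow z n.

(* Main.v *)
Require Import Defs.
From Stdlib Require Import Reals Lra Lia ClassicalEpsilon.
From Coquelicot Require Import Coquelicot.
Open Scope C_scope.


Fixpoint rsum (n : nat) (f : nat -> R) : R :=
  match n with O => 0%R | S m => (rsum m f + f m)%R end.

Lemma csum_ext n f g : (forall k, (k < n)%nat -> f k = g k) -> csum n f = csum n g.
Proof. induction n; simpl; intros H; auto. rewrite IHn by (intros; apply H; lia). rewrite H by lia. auto. Qed.

Lemma rsum_ext n f g : (forall k, (k < n)%nat -> f k = g k) -> rsum n f = rsum n g.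
Proof. induction n; simpl; intros H; auto. rewrite IHn by (intros; apply H; lia). rewrite H by lia. auto. Qed.

Lemma csum_plus n f g : csum n (fun k => f k + g k) = csum n f + csum n g.
Proof. induction n; simpl. ring. rewrite IHn. ring. Qed.

Lemma csum_minus n f g : csum n (fun k => f k - g k) = csum n f - csum n g.
Proof. induction n; simpl. ring. rewrite IHn. ring. Qed.

Lemma csum_scal n c f : csum n (fun k => c * f k) = c * csum n f.
Proof. induction n; simpl. ring. rewrite IHn. ring. Qed.

Lemma csum_zero n (f : nat -> C) : (forall k, (k < n)%nat -> f k = 0) -> csum n f = 0.
Proof. induction n; simpl; intros H; auto. rewrite IHn by (intros; apply H; lia). rewrite H by lia. ring. Qed.

Lemma csum_shift n f : csum (S n) f = f O + csum n (fun k => f (S k)).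
Proof. induction n. simpl. ring. change (csum (S (S n)) f) with (csum (S n) f + f (S n)).
 rewrite IHn. simpl. ring. Qed.

Lemma csum_add n m f : csum (n + m) f = csum n f + csum m (fun k => f (n + k)%nat).
Proof. induction m; simpl. rewrite Nat.add_0_r. ring. rewrite Nat.add_succ_r. simpl. rewrite IHm. ring. Qed.

Lemma rsum_plus n f g : rsum n (fun k => f k + g k)%R = (rsum n f + rsum n g)%R.
Proof. induction n; simpl. ring. rewrite IHn. ring. Qed.

Lemma rsum_scal n c f : rsum n (fun k => c * f k)%R = (c * rsum n f)%R.
Proof. induction n; simpl. ring. rewrite IHn. ring. Qed.

Lemma rsum_add n m f : rsum (n + m) f = (rsum n f + rsum m (fun k => f (n + k)%nat))%R.
Proof. induction m; simpl. rewrite Nat.add_0_r. ring. rewrite Nat.add_succ_r. simpl. rewrite IHm. ring. Qed.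

Lemma rsum_le n f g : (forall k, (k < n)%nat -> f k <= g k) -> rsum n f <= rsum n g.
Proof. induction n; simpl; intros H. lra. assert (H1 := H n ltac:(lia)). assert (rsum n f <= rsum n g) by (apply IHn; intros; apply H; lia). lra. Qed.

Lemma rsum_nonneg n f : (forall k, (k < n)%nat -> 0 <= f k) -> 0 <= rsum n f.
Proof. intros H. replace 0%R with (rsum n (fun _ => 0%R)). apply rsum_le; auto.
 induction n; simpl; auto. rewrite IHn. ring. intros; apply H; lia. Qed.

Lemma rsum_mono n m f : (forall k, 0 <= f k) -> (n <= m)%nat -> rsum n f <= rsum m f.
Proof. intros H Hnm. replace m with (n + (m - n))%nat by lia. rewrite rsum_add.
 assert (0 <= rsum (m - n) (fun k => f (n + k)%nat)) by (apply rsum_nonneg; auto). lra. Qed.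

Lemma Cmod_csum n f : Cmod (csum n f) <= rsum n (fun k => Cmod (f k)).
Proof. induction n; simpl. rewrite Cmod_0. lra.
 eapply Rle_trans. apply Cmod_triangle. lra. Qed.

Lemma rsum_geom n r : r <> 1%R -> rsum n (fun k => r ^ k)%R = ((1 - r ^ n) / (1 - r))%R.
Proof. intros Hr. induction n; simpl. field. lra. rewrite IHn. field. lra. Qed.

Lemma rsum_geom_le n r : 0 <= r < 1 -> rsum n (fun k => r ^ k)%R <= / (1 - r).
Proof. intros Hr. rewrite rsum_geom by lra. unfold Rdiv. rewrite <- (Rmult_1_l (/ (1 - r))) at 2. apply Rmult_le_compat_r.
 apply Rlt_le, Rinv_0_lt_compat; lra. assert (0 <= r ^ n) by (apply pow_le; lra). lra. Qed.

Lemma Cmod_le_ReIm (z : C) : Cmod z <= Rabs (Re z) + Rabs (Im z).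
Proof. unfold Cmod. destruct z as [a b]. simpl.
 rewrite <- (sqrt_pow2 (Rabs a + Rabs b)) by (generalize (Rabs_pos a) (Rabs_pos b); lra).
 apply sqrt_le_1_alt. simpl. rewrite !Rmult_1_r.
 replace (a * a)%R with (Rabs a * Rabs a)%R by (rewrite <- Rabs_mult; apply Rabs_pos_eq; nra).
 replace (b * b)%R with (Rabs b * Rabs b)%R by (rewrite <- Rabs_mult; apply Rabs_pos_eq; nra).
 generalize (Rabs_pos a) (Rabs_pos b); nra. Qed.

Lemma Im_le_Cmod (z : C) : Rabs (Im z) <= Cmod z.
Proof. unfold Cmod. destruct z as [a b]. simpl.
 rewrite <- sqrt_Rsqr_abs. apply sqrt_le_1_alt. unfold Rsqr. nra. Qed.

Lemma Cmod_RtoC_pos (r : R) : 0 <= r -> Cmod (RtoC r) = r.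
Proof. intros. rewrite Cmod_R. apply Rabs_pos_eq; auto. Qed.

Lemma Cmod_sub_le (a b : C) : Cmod a - Cmod b <= Cmod (a - b).
Proof. assert (H := Cmod_triangle (a - b) b). replace (a - b + b) with a in H by ring. lra. Qed.

Lemma Cmod_1_minus_ge (z : C) : 1 - Cmod z <= Cmod (1 - z).
Proof. assert (H := Cmod_sub_le 1 z). rewrite Cmod_1 in H. lra. Qed.

Lemma Cmod_1_minus_le (z : C) : Cmod (1 - z) <= 1 + Cmod z.
Proof. eapply Rle_trans. unfold Cminus. apply Cmod_triangle. rewrite Cmod_1, Cmod_opp. lra. Qed.

Lemma pow_le1 x k : (0 <= x <= 1)%R -> (x ^ k <= 1)%R.
Proof. intros H. induction k; simpl. lra. assert (0 <= x ^ k)%R by (apply pow_le; lra). nra. Qed.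

Lemma pow_anti x n m : (0 <= x <= 1)%R -> (n <= m)%nat -> (x ^ m <= x ^ n)%R.
Proof. intros H Hnm. replace m with (n + (m - n))%nat by lia. rewrite pow_add.
 assert (0 <= x ^ n)%R by (apply pow_le; lra). assert (x ^ (m - n) <= 1)%R by (apply pow_le1; auto).
 assert (0 <= x ^ (m - n))%R by (apply pow_le; lra). nra. Qed.


Definition cvC (u : nat -> C) (L : C) : Prop :=
  forall eps : R, 0 < eps -> exists N, forall n, (N <= n)%nat -> Cmod (u n - L) < eps.
Definition cvR (u : nat -> R) (l : R) : Prop :=
  forall eps : R, 0 < eps -> exists N, forall n, (N <= n)%nat -> Rabs (u n - l) < eps.

Lemma cvR_mono_bounded (u : nat -> R) (B : R) :
  (forall n, u n <= u (S n)) -> (forall n, u n <= B) ->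
  exists l, cvR u l /\ (forall n, u n <= l).
Proof. intros Hm HB.
 destruct (growing_cv u Hm) as [l Hl]. exists B. intros x [i ->]. auto.
 exists l. split. intros eps He. destruct (Hl eps He) as [N HN]. exists N. intros n Hn. apply HN. lia.
 intros n. destruct (Rle_or_lt (u n) l) as [h|h]; auto. exfalso.
 assert (Hmono : forall k, u n <= u (n + k)%nat).
 { induction k. rewrite Nat.add_0_r. lra. rewrite Nat.add_succ_r. specialize (Hm (n+k)%nat). lra. }
 destruct (Hl (u n - l)%R ltac:(lra)) as [N HN]. specialize (HN (n + N)%nat ltac:(lia)).
 specialize (Hmono N). unfold Rdist in HN. rewrite Rabs_pos_eq in HN by lra. lra. Qed.

Lemma cvR_cauchy u l : cvR u l -> forall eps, 0 < eps -> exists N, forall n m, (N <= n)%nat -> (N <= m)%nat -> Rabs (u n - u m) < eps.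
Proof. intros H eps He. destruct (H (eps/2)%R ltac:(lra)) as [N HN]. exists N. intros n m Hn Hm.
 replace (u n - u m)%R with ((u n - l) - (u m - l))%R by ring.
 eapply Rle_lt_trans. apply Rabs_triang. rewrite Rabs_Ropp.
 assert (H1 := HN n Hn). assert (H2 := HN m Hm). lra. Qed.

Lemma Re_minus (a b : C) : Re (a - b) = (Re a - Re b)%R.
Proof. destruct a, b. simpl. ring. Qed.
Lemma Im_minus (a b : C) : Im (a - b) = (Im a - Im b)%R.
Proof. destruct a, b. simpl. ring. Qed.

Definition cauchyC (u : nat -> C) : Prop :=
  forall eps, 0 < eps -> exists N, forall n m, (N <= n)%nat -> (N <= m)%nat -> Cmod (u n - u m) < eps.

Lemma cauchyC_cv u : cauchyC u -> exists L, cvC u L.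
Proof. intros H.
 assert (HR : Cauchy_crit (fun n => Re (u n))).
 { intros eps He. destruct (H eps He) as [N HN]. exists N. intros n m Hn Hm. unfold Rdist.
   rewrite <- Re_minus. eapply Rle_lt_trans. apply re_le_Cmod. apply HN; lia. }
 assert (HI : Cauchy_crit (fun n => Im (u n))).
 { intros eps He. destruct (H eps He) as [N HN]. exists N. intros n m Hn Hm. unfold Rdist.
   rewrite <- Im_minus. eapply Rle_lt_trans. apply Im_le_Cmod. apply HN; lia. }
 destruct (Rcomplete.R_complete _ HR) as [lr Hr]. destruct (Rcomplete.R_complete _ HI) as [li Hi].
 exists (lr, li). intros eps He.
 destruct (Hr (eps/2)%R ltac:(lra)) as [N1 H1]. destruct (Hi (eps/2)%R ltac:(lra)) as [N2 H2].
 exists (N1 + N2)%nat. intros n Hn. eapply Rle_lt_trans. apply Cmod_le_ReIm.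
 rewrite Re_minus, Im_minus. simpl.
 assert (A := H1 n ltac:(lia)). assert (B := H2 n ltac:(lia)). unfold Rdist in A, B. lra. Qed.

Lemma csum_diff_bound (a : nat -> C) (b : nat -> R) n m :
  (forall k, Cmod (a k) <= b k) -> (n <= m)%nat ->
  Cmod (csum m a - csum n a) <= (rsum m b - rsum n b)%R.
Proof. intros Hb Hnm. replace m with (n + (m - n))%nat by lia. rewrite csum_add, rsum_add.
 replace (csum n a + csum (m - n) (fun k => a (n + k)%nat) - csum n a) with (csum (m - n) (fun k => a (n + k)%nat)) by ring.
 replace (rsum n b + rsum (m - n) (fun k => b (n + k)%nat) - rsum n b)%R with (rsum (m - n) (fun k => b (n + k)%nat)) by ring.
 eapply Rle_trans. apply Cmod_csum. apply rsum_le. intros; apply Hb. Qed.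

Lemma ser_dom (a : nat -> C) (b : nat -> R) (B : R) :
  (forall k, Cmod (a k) <= b k) -> (forall n, rsum n b <= B) ->
  exists S, cvC (fun n => csum n a) S.
Proof. intros Hb HB. apply cauchyC_cv.
 assert (Hb0 : forall k, 0 <= b k) by (intros k; eapply Rle_trans; [apply Cmod_ge_0| apply Hb]).
 destruct (cvR_mono_bounded (fun n => rsum n b) B) as [l [Hl _]]; auto.
 intros n; simpl. specialize (Hb0 n). lra.
 intros eps He. destruct (cvR_cauchy _ _ Hl eps He) as [N HN]. exists N. intros n m Hn Hm.
 destruct (Nat.le_ge_cases n m) as [h|h].
 - rewrite <- Cmod_opp. replace (- (csum n a - csum m a)) with (csum m a - csum n a) by ring.
   eapply Rle_lt_trans. apply csum_diff_bound; eauto. specialize (HN m n Hm Hn). 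
   eapply Rle_lt_trans. apply Rle_abs. auto.
 - eapply Rle_lt_trans. apply csum_diff_bound; eauto. specialize (HN n m Hn Hm).
   eapply Rle_lt_trans. apply Rle_abs. auto. Qed.

Lemma ser_geom (a : nat -> C) (C0 r : R) :
  0 <= r < 1 -> (forall k, Cmod (a k) <= C0 * r ^ k) -> exists S, cvC (fun n => csum n a) S.
Proof. intros Hr Hb. apply (ser_dom a (fun k => C0 * r ^ k)%R (Rabs C0 / (1 - r))%R); auto.
 intros n. rewrite rsum_scal. assert (0 <= C0).
 { specialize (Hb O). simpl in Hb. generalize (Cmod_ge_0 (a O)). lra. }
 rewrite Rabs_pos_eq by auto. unfold Rdiv. apply Rmult_le_compat_l; auto. apply rsum_geom_le; auto. Qed.

Lemma cvC_unique u L1 L2 : cvC u L1 -> cvC u L2 -> L1 = L2.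
Proof. intros H1 H2. apply Ceq_minus. apply Cmod_eq_0.
 destruct (Req_dec (Cmod (L1 - L2)) 0) as [h|h]; auto. exfalso.
 assert (Hp : 0 < Cmod (L1 - L2)) by (generalize (Cmod_ge_0 (L1 - L2)); lra).
 destruct (H1 _ (ltac:(lra) : 0 < Cmod (L1 - L2) / 2)%R) as [N1 A].
 destruct (H2 _ (ltac:(lra) : 0 < Cmod (L1 - L2) / 2)%R) as [N2 B].
 specialize (A (N1 + N2)%nat ltac:(lia)). specialize (B (N1 + N2)%nat ltac:(lia)).
 assert (T := Cmod_triangle (- (u (N1 + N2)%nat - L1)) (u (N1 + N2)%nat - L2)).
 rewrite Cmod_opp in T. replace (- (u (N1 + N2)%nat - L1) + (u (N1 + N2)%nat - L2)) with (L1 - L2) in T by ring. lra. Qed.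

Lemma cvC_const c : cvC (fun _ => c) c.
Proof. intros eps He. exists O. intros. replace (c - c) with (RtoC 0) by ring. rewrite Cmod_0. auto. Qed.

Lemma cvC_ext u v L : (forall n, u n = v n) -> cvC u L -> cvC v L.
Proof. intros E H eps He. destruct (H eps He) as [N HN]. exists N. intros n Hn. rewrite <- E. auto. Qed.

Lemma cvC_ext_ev u v L N0 : (forall n, (N0 <= n)%nat -> u n = v n) -> cvC u L -> cvC v L.
Proof. intros E H eps He. destruct (H eps He) as [N HN]. exists (N + N0)%nat. intros n Hn. rewrite <- E by lia. apply HN; lia. Qed.

Lemma cvC_plus u v L M : cvC u L -> cvC v M -> cvC (fun n => u n + v n) (L + M).
Proof. intros H1 H2 eps He. destruct (H1 (eps/2)%R ltac:(lra)) as [N1 A]. destruct (H2 (eps/2)%R ltac:(lra)) as [N2 B].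
 exists (N1 + N2)%nat. intros n Hn. replace (u n + v n - (L + M)) with ((u n - L) + (v n - M)) by ring.
 eapply Rle_lt_trans. apply Cmod_triangle. assert (A1 := A n ltac:(lia)). assert (B1 := B n ltac:(lia)). lra. Qed.

Lemma cvC_opp u L : cvC u L -> cvC (fun n => - u n) (- L).
Proof. intros H eps He. destruct (H eps He) as [N HN]. exists N. intros n Hn.
 replace (- u n - - L) with (- (u n - L)) by ring. rewrite Cmod_opp. auto. Qed.

Lemma cvC_minus u v L M : cvC u L -> cvC v M -> cvC (fun n => u n - v n) (L - M).
Proof. intros. apply cvC_plus; auto. apply cvC_opp; auto. Qed.

Lemma cvC_bounded u L : cvC u L -> exists K, 0 < K /\ forall n, Cmod (u n) <= K.
Proof. intros H. destruct (H 1%R Rlt_0_1) as [N HN].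
 assert (Hf : forall m, exists K, 0 < K /\ forall n, (n < m)%nat -> Cmod (u n) <= K).
 { induction m. exists 1%R. split. lra. intros; lia.
   destruct IHm as [K [HK HK']]. exists (Rmax K (Cmod (u m))). split. eapply Rlt_le_trans; [apply HK| apply Rmax_l].
   intros n Hn. destruct (Nat.eq_dec n m) as [->|h]. apply Rmax_r. eapply Rle_trans. apply HK'; lia. apply Rmax_l. }
 destruct (Hf N) as [K [HK HK']]. exists (Rmax K (1 + Cmod L)). split. eapply Rlt_le_trans; [apply HK| apply Rmax_l].
 intros n. destruct (Nat.lt_ge_cases n N) as [h|h]. eapply Rle_trans. apply HK'; auto. apply Rmax_l.
 eapply Rle_trans; [|apply Rmax_r]. specialize (HN n h). assert (T := Cmod_triangle (u n - L) L).
 replace (u n - L + L) with (u n) in T by ring. lra. Qed.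

Lemma cvC_mult u v L M : cvC u L -> cvC v M -> cvC (fun n => u n * v n) (L * M).
Proof. intros H1 H2. destruct (cvC_bounded _ _ H1) as [K [HK HKb]].
 intros eps He. set (e1 := (eps / (2 * (Cmod M + 1)))%R). set (e2 := (eps / (2 * K))%R).
 assert (He1 : 0 < e1) by (unfold e1; apply Rdiv_lt_0_compat; [lra| generalize (Cmod_ge_0 M); lra]).
 assert (He2 : 0 < e2) by (unfold e2; apply Rdiv_lt_0_compat; lra).
 destruct (H1 e1 He1) as [N1 A]. destruct (H2 e2 He2) as [N2 B]. exists (N1 + N2)%nat. intros n Hn.
 replace (u n * v n - L * M) with (u n * (v n - M) + (u n - L) * M) by ring.
 eapply Rle_lt_trans. apply Cmod_triangle. rewrite !Cmod_mult.
 assert (A1 := A n ltac:(lia)). assert (B1 := B n ltac:(lia)). assert (Ku := HKb n).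
 assert (h1 : (Cmod (u n) * Cmod (v n - M) <= K * e2)%R) by (apply Rmult_le_compat; try apply Cmod_ge_0; lra).
 assert (h2 : (Cmod (u n - L) * Cmod M <= e1 * Cmod M)%R) by (apply Rmult_le_compat_r; [apply Cmod_ge_0|lra]).
 assert (h3 : (K * e2 = eps / 2)%R) by (unfold e2; field; lra).
 assert (h4 : (e1 * Cmod M < eps / 2)%R).
 { unfold e1. generalize (Cmod_ge_0 M); intros. apply (Rmult_lt_reg_r (2 * (Cmod M + 1))). lra.
   replace (eps / (2 * (Cmod M + 1)) * Cmod M * (2 * (Cmod M + 1)))%R with (eps * Cmod M)%R by (field; lra).
   replace (eps / 2 * (2 * (Cmod M + 1)))%R with (eps * Cmod M + eps)%R by field. lra. }
 lra. Qed.

Lemma cvC_scal c u L : cvC u L -> cvC (fun n => c * u n) (c * L).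
Proof. intros. apply cvC_mult; auto. apply cvC_const. Qed.

Lemma cvC_shift u L : cvC u L -> cvC (fun n => u (S n)) L.
Proof. intros H eps He. destruct (H eps He) as [N HN]. exists N. intros n Hn. apply HN; lia. Qed.

Lemma cvC_shift_inv u L : cvC (fun n => u (S n)) L -> cvC u L.
Proof. intros H eps He. destruct (H eps He) as [N HN]. exists (S N). intros n Hn.
 replace n with (S (n - 1)) by lia. apply HN; lia. Qed.

Lemma cvC_le u L c v : cvC u L -> (exists N, forall n, (N <= n)%nat -> Cmod (u n - v) <= c) -> Cmod (L - v) <= c.
Proof. intros H [N HN]. destruct (Rle_or_lt (Cmod (L - v)) c) as [h|h]; auto. exfalso.
 destruct (H (Cmod (L - v) - c)%R ltac:(lra)) as [N1 A]. specialize (A (N + N1)%nat ltac:(lia)). specialize (HN (N + N1)%nat ltac:(lia)).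
 assert (T := Cmod_triangle (- (u (N + N1)%nat - L)) (u (N + N1)%nat - v)). rewrite Cmod_opp in T.
 replace (- (u (N + N1)%nat - L) + (u (N + N1)%nat - v)) with (L - v) in T by ring. lra. Qed.

Lemma cvC_finsum (f : nat -> nat -> C) (L : nat -> C) I :
  (forall i, (i < I)%nat -> cvC (fun J => f i J) (L i)) -> cvC (fun J => csum I (fun i => f i J)) (csum I L).
Proof. induction I; simpl; intros H. apply cvC_const. apply cvC_plus. apply IHI; intros; apply H; lia. apply H; lia. Qed.

Lemma Cminus_0_r (z : C) : z - 0 = z.
Proof. ring. Qed.

Lemma cvC_zero_bound u (b : nat -> R) : (forall n, Cmod (u n) <= b n) -> cvR b 0 -> cvC u 0.
Proof. intros H Hb eps He. destruct (Hb eps He) as [N HN]. exists N. intros n Hn. rewrite Cminus_0_r.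
 eapply Rle_lt_trans. apply H. specialize (HN n Hn). rewrite Rminus_0_r in HN. eapply Rle_lt_trans. apply Rle_abs. auto. Qed.

Lemma cvR_pow r : Rabs r < 1 -> cvR (fun n => r ^ n)%R 0.
Proof. intros Hr eps He. destruct (pow_lt_1_zero r Hr eps He) as [N HN]. exists N. intros n Hn. rewrite Rminus_0_r. apply HN. lia. Qed.

Lemma cvC_Cmod_zero u : cvC u 0 -> cvR (fun n => Cmod (u n)) 0.
Proof. intros H eps He. destruct (H eps He) as [N HN]. exists N. intros n Hn. specialize (HN n Hn). rewrite Cminus_0_r in HN.
 rewrite Rminus_0_r. rewrite Rabs_pos_eq by apply Cmod_ge_0. auto. Qed.


Lemma cprod_add n m f : cprod (n + m) f = cprod n f * cprod m (fun k => f (n + k)%nat).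
Proof. induction m; simpl. rewrite Nat.add_0_r. ring. rewrite Nat.add_succ_r. simpl. rewrite IHm. ring. Qed.

Lemma cprod_ext n f g : (forall k, (k < n)%nat -> f k = g k) -> cprod n f = cprod n g.
Proof. induction n; simpl; intros H; auto. rewrite IHn by (intros; apply H; lia). rewrite H by lia. auto. Qed.

Lemma qpoch_S a q n : qpoch a q (S n) = qpoch a q n * (1 - a * Cpow q n).
Proof. reflexivity. Qed.

Lemma qpoch_0 a q : qpoch a q O = 1.
Proof. reflexivity. Qed.

Lemma qpoch_add a q n m : qpoch a q (n + m) = qpoch a q n * qpoch (a * Cpow q n) q m.
Proof. unfold qpoch. rewrite cprod_add. apply f_equal. apply cprod_ext. intros k _.
 rewrite Cpow_add_r. ring. Qed.

Lemma qpoch_shift1 a q n : qpoch a q (S n) = (1 - a) * qpoch (a * q) q n.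
Proof. change (S n) with (1 + n)%nat. rewrite qpoch_add. unfold qpoch at 1. simpl. f_equal. ring. f_equal. ring. Qed.

Lemma exp_ge_1plus x : 0 <= x -> 1 + x <= exp x.
Proof. intros H. destruct (Req_dec x 0) as [->|h]. rewrite exp_0. lra. left. apply exp_ineq1; auto. Qed.

Lemma Cmod_qfac a q k : Cmod (a * Cpow q k) = (Cmod a * Cmod q ^ k)%R.
Proof. rewrite Cmod_mult, Cmod_pow. auto. Qed.

Lemma qpoch_upper a q n : Cmod q < 1 ->
  Cmod (qpoch a q n) <= exp (Cmod a / (1 - Cmod q)).
Proof. intros Hq. assert (Hq0 := Cmod_ge_0 q).
 assert (H : forall n, Cmod (qpoch a q n) <= exp (Cmod a * rsum n (fun k => (Cmod q ^ k)%R))%R).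
 { induction n0; simpl. unfold qpoch; simpl. rewrite Cmod_1. rewrite Rmult_0_r, exp_0. lra.
   rewrite qpoch_S, Cmod_mult. rewrite Rmult_plus_distr_l, exp_plus.
   apply Rmult_le_compat; try apply Cmod_ge_0; auto.
   eapply Rle_trans. apply Cmod_1_minus_le. rewrite Cmod_qfac. apply exp_ge_1plus.
   apply Rmult_le_pos. apply Cmod_ge_0. apply pow_le; auto. }
 eapply Rle_trans. apply H. apply exp_le_3 || idtac.
 destruct (Rle_lt_or_eq_dec _ _ (Rmult_le_compat_l (Cmod a) _ _ (Cmod_ge_0 a) (rsum_geom_le n (Cmod q) (conj Hq0 Hq)))) as [h|h].
 left. apply exp_increasing. unfold Rdiv. auto. rewrite h. right. auto. Qed.

Lemma qpoch_wlower a q n : (1 - Cmod a * rsum n (fun k => (Cmod q ^ k)%R))%R <= Cmod (qpoch a q n).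
Proof. induction n; simpl. unfold qpoch; simpl. rewrite Cmod_1. lra.
 rewrite qpoch_S, Cmod_mult.
 assert (h1 := Cmod_1_minus_ge (a * Cpow q n)). rewrite Cmod_qfac in h1.
 assert (h0 : (0 <= Cmod a * Cmod q ^ n)%R) by (apply Rmult_le_pos; [apply Cmod_ge_0| apply pow_le, Cmod_ge_0]).
 assert (hs : 0 <= Cmod a * rsum n (fun k => (Cmod q ^ k)%R)) by (apply Rmult_le_pos; [apply Cmod_ge_0| apply rsum_nonneg; intros; apply pow_le, Cmod_ge_0]).
 set (s := (Cmod a * rsum n (fun k => (Cmod q ^ k)%R))%R) in *. set (z := (Cmod a * Cmod q ^ n)%R) in *.
 replace (1 - Cmod a * (rsum n (fun k => (Cmod q ^ k)%R) + Cmod q ^ n))%R with (1 - s - z)%R by (unfold s, z; ring).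
 assert (P0 := Cmod_ge_0 (qpoch a q n)). assert (P1 := Cmod_ge_0 (1 - a * Cpow q n)).
 destruct (Rle_or_lt (1 - s - z) 0). nra. nra. Qed.

Lemma finite_min (f : nat -> R) K : (forall n, (n < K)%nat -> 0 < f n) -> exists d, 0 < d /\ forall n, (n < K)%nat -> d <= f n.
Proof. induction K; intros H. exists 1%R. split. lra. intros; lia.
 destruct IHK as [d [Hd Hd']]. { intros; apply H; lia. } exists (Rmin d (f K)). split. { apply Rmin_glb_lt. auto. apply H; lia. }
 intros n Hn. destruct (Nat.eq_dec n K) as [->|h]. apply Rmin_r. eapply Rle_trans. apply Rmin_l. apply Hd'; lia. Qed.

Lemma qpoch_nz a q n : (forall k, RtoC 1 - a * Cpow q k <> 0) -> qpoch a q n <> 0.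
Proof. intros H. induction n. unfold qpoch; simpl. apply C1_nz. rewrite qpoch_S. apply Cmult_neq_0; auto. Qed.

Lemma pow_small q : 0 <= q < 1 -> forall e, 0 < e -> exists K, forall n, (K <= n)%nat -> q ^ n < e.
Proof. intros Hq e He. destruct (pow_lt_1_zero q ltac:(rewrite Rabs_pos_eq; lra) e He) as [N HN].
 exists N. intros n Hn. specialize (HN n Hn). rewrite Rabs_pos_eq in HN; auto. apply pow_le; lra. Qed.

Lemma qpoch_lower a q : Cmod q < 1 -> (forall k, RtoC 1 - a * Cpow q k <> 0) ->
  exists d, 0 < d /\ forall n, d <= Cmod (qpoch a q n).
Proof. intros Hq H. assert (Hq0 := Cmod_ge_0 q).
 destruct (pow_small (Cmod q) (conj Hq0 Hq) ((1 - Cmod q) / (2 * (Cmod a + 1)))%R) as [K HK].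
 { apply Rdiv_lt_0_compat. lra. generalize (Cmod_ge_0 a); lra. }
 specialize (HK K (le_n K)).
 destruct (finite_min (fun n => Cmod (qpoch a q n)) K) as [d [Hd Hd']].
 { intros n _. apply Cmod_gt_0. apply qpoch_nz; auto. }
 assert (HK0 : 0 < Cmod (qpoch a q K)) by (apply Cmod_gt_0, qpoch_nz; auto).
 exists (Rmin d (Cmod (qpoch a q K) / 2)). split. apply Rmin_glb_lt; lra.
 intros n. destruct (Nat.lt_ge_cases n K) as [h|h]. eapply Rle_trans. apply Rmin_l. auto.
 eapply Rle_trans. apply Rmin_r. replace n with (K + (n - K))%nat by lia. rewrite qpoch_add, Cmod_mult.
 assert (W := qpoch_wlower (a * Cpow q K) q (n - K)). rewrite Cmod_qfac in W.
 assert (G := rsum_geom_le (n - K) (Cmod q) (conj Hq0 Hq)).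
 assert (Ha := Cmod_ge_0 a). assert (HqK : (0 <= Cmod q ^ K)%R) by (apply pow_le; auto).
 assert (Hr : 0 <= rsum (n - K) (fun k => (Cmod q ^ k)%R)) by (apply rsum_nonneg; intros; apply pow_le; auto).
 assert (X : (Cmod a * Cmod q ^ K * rsum (n - K) (fun k => (Cmod q ^ k)%R) <= 1/2)%R).
 { assert (Y : (Cmod a * Cmod q ^ K <= (1 - Cmod q) / 2)%R).
   { apply Rle_trans with ((Cmod a + 1) * Cmod q ^ K)%R. nra.
     apply Rlt_le. apply (Rmult_lt_reg_r (/ (Cmod a + 1))). apply Rinv_0_lt_compat; lra.
     replace ((Cmod a + 1) * Cmod q ^ K * / (Cmod a + 1))%R with (Cmod q ^ K)%R by (field; lra).
     replace ((1 - Cmod q) / 2 * / (Cmod a + 1))%R with ((1 - Cmod q) / (2 * (Cmod a + 1)))%R by (field; lra). auto. }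
   apply Rle_trans with ((1 - Cmod q)/2 * / (1 - Cmod q))%R.
   apply Rmult_le_compat; try nra. right. field. lra. }
 assert (Z : 1/2 <= Cmod (qpoch (a * Cpow q K) q (n - K))) by lra.
 assert (P := Cmod_ge_0 (qpoch a q K)). nra. Qed.

Lemma telescope (u : nat -> C) n : u n = u O + csum n (fun k => u (S k) - u k).
Proof. induction n; simpl. ring. rewrite Cplus_assoc, <- IHn. ring. Qed.

Lemma qpoch_cv a q : Cmod q < 1 -> exists P, cvC (qpoch a q) P.
Proof. intros Hq. assert (Hq0 := Cmod_ge_0 q). set (E := exp (Cmod a / (1 - Cmod q))).
 destruct (ser_geom (fun k => qpoch a q (S k) - qpoch a q k) (E * Cmod a)%R (Cmod q)) as [Ss HS]. auto.
 { intros k. rewrite qpoch_S. replace (qpoch a q k * (1 - a * Cpow q k) - qpoch a q k) with (- (qpoch a q k * (a * Cpow q k))) by ring.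
   rewrite Cmod_opp, Cmod_mult, Cmod_qfac. rewrite <- Rmult_assoc. apply Rmult_le_compat_r. apply pow_le; auto.
   apply Rmult_le_compat_r. apply Cmod_ge_0. apply qpoch_upper; auto. }
 exists (1 + Ss). apply cvC_ext with (fun n => 1 + csum n (fun k => qpoch a q (S k) - qpoch a q k)).
 intros n. rewrite (telescope (qpoch a q) n). reflexivity. apply cvC_plus. apply cvC_const. auto. Qed.

Definition qinf (a q : C) : C := epsilon (inhabits (RtoC 0)) (fun P => cvC (qpoch a q) P).

Lemma qinf_spec a q : Cmod q < 1 -> cvC (qpoch a q) (qinf a q).
Proof. intros Hq. unfold qinf. apply epsilon_spec. apply qpoch_cv; auto. Qed.

Lemma cvC_ge u L d : cvC u L -> (forall n, d <= Cmod (u n)) -> d <= Cmod L.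
Proof. intros H Hd. destruct (Rle_or_lt d (Cmod L)) as [h|h]; auto. exfalso.
 destruct (H (d - Cmod L)%R ltac:(lra)) as [N HN]. specialize (HN N (le_n N)). specialize (Hd N).
 assert (T := Cmod_triangle (u N - L) L). replace (u N - L + L) with (u N) in T by ring. lra. Qed.

Lemma qinf_nz a q : Cmod q < 1 -> (forall k, RtoC 1 - a * Cpow q k <> 0) -> qinf a q <> 0.
Proof. intros Hq H. destruct (qpoch_lower a q Hq H) as [d [Hd Hd']].
 assert (X := cvC_ge _ _ _ (qinf_spec a q Hq) Hd'). intros E. rewrite E, Cmod_0 in X. lra. Qed.

Lemma small_nz a q : Cmod a < 1 -> Cmod q < 1 -> forall k, RtoC 1 - a * Cpow q k <> 0.
Proof. intros Ha Hq k E. assert (X : a * Cpow q k = 1). { apply Ceq_minus in E. rewrite <- E. ring. }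
 assert (Y := f_equal Cmod X). rewrite Cmod_qfac, Cmod_1 in Y.
 assert ((Cmod q ^ k <= 1)%R) by (apply pow_le1; split; [apply Cmod_ge_0| lra]). generalize (Cmod_ge_0 a). nra. Qed.

Lemma cvC_shiftn u L n : cvC u L -> cvC (fun m => u (n + m)%nat) L.
Proof. intros H eps He. destruct (H eps He) as [N HN]. exists N. intros m Hm. apply HN; lia. Qed.

Lemma qinf_split a q n : Cmod q < 1 -> qinf a q = qpoch a q n * qinf (a * Cpow q n) q.
Proof. intros Hq. apply (cvC_unique (fun m => qpoch a q (n + m)%nat)).
 apply cvC_shiftn, qinf_spec; auto.
 apply cvC_ext with (fun m => qpoch a q n * qpoch (a * Cpow q n) q m). intros; rewrite qpoch_add; auto.
 apply cvC_scal, qinf_spec; auto. Qed.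

Lemma qinf_shift1 a q : Cmod q < 1 -> qinf a q = (1 - a) * qinf (a * q) q.
Proof. intros Hq. rewrite (qinf_split a q 1 Hq). unfold qpoch. simpl. f_equal. ring. f_equal. ring. Qed.

Lemma qinf_zero q : Cmod q < 1 -> qinf 0 q = 1.
Proof. intros Hq. apply (cvC_unique (qpoch 0 q)). apply qinf_spec; auto.
 apply cvC_ext with (fun _ => RtoC 1). intros n. induction n. reflexivity. rewrite qpoch_S, <- IHn. ring. apply cvC_const. Qed.


Fixpoint rprod (n : nat) (f : nat -> R) : R :=
  match n with O => 1%R | S m => (rprod m f * f m)%R end.

Lemma rprod_nonneg n f : (forall k, 0 <= f k) -> 0 <= rprod n f.
Proof. intros H. induction n; simpl. lra. apply Rmult_le_pos; auto. Qed.

Lemma geom_prod (g : nat -> R) M rho J :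
  (forall j, 0 <= g j <= M) -> (forall j, (J <= j)%nat -> g j <= rho) -> 0 < rho <= M ->
  forall k, rprod k g <= (M / rho) ^ J * rho ^ k.
Proof. intros Hg HJ Hr.
 assert (A : forall k, (k <= J)%nat -> rprod k g <= M ^ k).
 { induction k; intros Hk; simpl. lra. assert (X := IHk ltac:(lia)). assert (Y := Hg k).
   assert (0 <= rprod k g) by (apply rprod_nonneg; intros; apply Hg). nra. }
 assert (Hq : 1 <= M / rho). { apply (Rmult_le_reg_r rho). lra. unfold Rdiv. rewrite Rmult_assoc, Rinv_l by lra. lra. }
 assert (B : forall k, (k <= J)%nat -> M ^ k <= (M / rho) ^ J * rho ^ k).
 { intros k Hk. replace (M ^ k)%R with ((M / rho) ^ k * rho ^ k)%R.
   apply Rmult_le_compat_r. apply pow_le; lra. apply Rle_pow; auto.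
   rewrite <- Rpow_mult_distr. f_equal. field. lra. }
 induction k. simpl. replace 1%R with (1 * 1)%R at 1 by ring. apply Rmult_le_compat; try lra. apply pow_R1_Rle; auto.
 destruct (Nat.le_gt_cases (S k) J) as [h|h]. eapply Rle_trans. apply A; auto. apply B; auto.
 simpl. assert (Y := HJ k ltac:(lia)). assert (Y2 := Hg k). assert (0 <= rprod k g) by (apply rprod_nonneg; intros; apply Hg).
 assert (0 <= (M / rho) ^ J * rho ^ k) by (apply Rmult_le_pos; apply pow_le; lra). nra. Qed.

Lemma cauchyP_rprod q x y k :
  Cmod (cauchyP q x y k) <= rprod k (fun j => Cmod x + Cmod y * Cmod q ^ j)%R.
Proof. induction k; simpl. unfold cauchyP; simpl. rewrite Cmod_1. lra.
 unfold cauchyP in *. simpl. rewrite Cmod_mult. apply Rmult_le_compat; try apply Cmod_ge_0; auto.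
 eapply Rle_trans. unfold Cminus. apply Cmod_triangle. rewrite Cmod_opp, Cmod_mult, Cmod_pow. nra. Qed.

Lemma rprod_le n f g : (forall j, 0 <= f j <= g j) -> rprod n f <= rprod n g.
Proof. intros H. induction n; simpl. lra. assert (0 <= rprod n f) by (apply rprod_nonneg; intros; apply H).
 apply Rmult_le_compat; auto; apply H. Qed.

Lemma cauchyP_bound q x y rho : Cmod q < 1 -> Cmod x < rho ->
  exists C0, 0 <= C0 /\ forall n k, Cmod (cauchyP q x (y * Cpow q n) k) <= C0 * rho ^ k.
Proof. intros Hq Hr. assert (Hq0 := Cmod_ge_0 q). assert (Hx := Cmod_ge_0 x). assert (Hy := Cmod_ge_0 y).
 destruct (pow_small (Cmod q) (conj Hq0 Hq) ((rho - Cmod x) / (Cmod y + 1))%R) as [J HJ].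
 { apply Rdiv_lt_0_compat; lra. }
 set (M := Rmax rho (Cmod x + Cmod y)).
 assert (HM1 := Rmax_l rho (Cmod x + Cmod y)). assert (HM2 := Rmax_r rho (Cmod x + Cmod y)). fold M in HM1, HM2.
 exists ((M / rho) ^ J)%R. split. apply pow_le. apply Rmult_le_pos. lra.
 apply Rlt_le, Rinv_0_lt_compat. lra.
 intros n k. eapply Rle_trans. apply cauchyP_rprod.
 eapply Rle_trans. apply (rprod_le k _ (fun j => Cmod x + Cmod y * Cmod q ^ j)%R).
 { intros j. rewrite Cmod_mult, Cmod_pow. assert (0 <= Cmod q ^ n)%R by (apply pow_le; auto).
   assert (Cmod q ^ n <= 1)%R by (apply pow_le1; lra). assert (0 <= Cmod q ^ j)%R by (apply pow_le; auto).
   assert (0 <= Cmod y * Cmod q ^ j)%R by nra.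
   assert (0 <= Cmod y * Cmod q ^ n)%R by nra.
   assert (0 <= Cmod y * Cmod q ^ n * Cmod q ^ j)%R by nra.
   assert (Cmod y * Cmod q ^ n * Cmod q ^ j <= Cmod y * Cmod q ^ j)%R.
   { rewrite (Rmult_comm (Cmod y)), Rmult_assoc. rewrite <- (Rmult_1_l (Cmod y * Cmod q ^ j)) at 2. apply Rmult_le_compat_r; nra. }
   split; lra. }
 apply geom_prod; try lra.
 - intros j. assert (0 <= Cmod q ^ j)%R by (apply pow_le; auto). assert (Cmod q ^ j <= 1)%R by (apply pow_le1; lra). split; nra.
 - intros j Hj. specialize (HJ j Hj). assert (0 <= Cmod q ^ j)%R by (apply pow_le; auto).
   assert (Cmod y * Cmod q ^ j <= (Cmod y + 1) * Cmod q ^ j)%R by nra.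
   assert ((Cmod y + 1) * Cmod q ^ j < rho - Cmod x)%R.
   { apply (Rmult_lt_reg_r (/ (Cmod y + 1))). apply Rinv_0_lt_compat; lra.
     replace ((Cmod y + 1) * Cmod q ^ j * / (Cmod y + 1))%R with (Cmod q ^ j)%R by (field; lra). auto. }
   lra. Qed.

Lemma cauchyP_bound0 q x y rho : Cmod q < 1 -> Cmod x < rho ->
  exists C0, 0 <= C0 /\ forall k, Cmod (cauchyP q x y k) <= C0 * rho ^ k.
Proof. intros Hq Hr. destruct (cauchyP_bound q x y rho Hq Hr) as [C0 [H0 H]]. exists C0. split; auto.
 intros k. specialize (H O k). simpl in H. rewrite Cmult_1_r in H. auto. Qed.

Lemma qq_nz q k : Cmod q < 1 -> qpoch q q k <> 0.
Proof. intros Hq. apply qpoch_nz. apply small_nz; auto. Qed.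

Lemma qq_bounds q : Cmod q < 1 -> exists kap Q, 0 < kap /\ 0 < Q /\ forall n, kap <= Cmod (qpoch q q n) <= Q.
Proof. intros Hq. destruct (qpoch_lower q q Hq (small_nz q q Hq Hq)) as [d [Hd Hd']].
 exists d, (exp (Cmod q / (1 - Cmod q))). split; auto. split. apply exp_pos. intros n. split; auto. apply qpoch_upper; auto. Qed.

Lemma qbinom_bound q kap Q n k : Cmod q < 1 -> 0 < kap -> (forall n, kap <= Cmod (qpoch q q n) <= Q) ->
  Cmod (qbinom q n k) <= Q / (kap * kap).
Proof. intros Hq Hk H. unfold qbinom. rewrite Cmod_div. rewrite Cmod_mult.
 destruct (H n) as [A1 A2]. destruct (H k) as [B1 B2]. destruct (H (n - k)%nat) as [C1 C2].
 unfold Rdiv. apply Rmult_le_compat. apply Cmod_ge_0. apply Rlt_le, Rinv_0_lt_compat. nra. lra.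
 apply Rinv_le_contravar. nra. apply Rmult_le_compat; lra.
 apply Cmult_neq_0; apply qq_nz; auto. Qed.

Lemma geom_sum_bound r0 r1 n : 0 <= r0 < r1 -> 1 <= r1 ->
  rsum (S n) (fun k => r0 ^ k)%R <= r1 ^ n / (1 - r0 / r1).
Proof. intros H0 H1. apply Rle_trans with (rsum (S n) (fun k => r1 ^ n * (r0 / r1) ^ k))%R.
 - apply rsum_le. intros k Hk. replace (r0 ^ k)%R with (r1 ^ k * (r0 / r1) ^ k)%R.
   apply Rmult_le_compat_r. apply pow_le. apply Rmult_le_pos; [lra| apply Rlt_le, Rinv_0_lt_compat; lra].
   apply Rle_pow; auto. lia. rewrite <- Rpow_mult_distr. f_equal. field. lra.
 - rewrite rsum_scal. unfold Rdiv at 1. apply Rmult_le_compat_l. apply pow_le; lra.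
   apply rsum_geom_le. split. apply Rmult_le_pos; [lra| apply Rlt_le, Rinv_0_lt_compat; lra].
   apply (Rmult_lt_reg_r r1). lra. unfold Rdiv. rewrite Rmult_assoc, Rinv_l by lra. lra. Qed.

Lemma hRS_bound q x y rho : Cmod q < 1 -> Cmod x < rho -> 1 <= rho ->
  exists C0, 0 <= C0 /\ forall n, Cmod (hRS q x y n) <= C0 * rho ^ n.
Proof. intros Hq Hx H1. destruct (qq_bounds q Hq) as [kap [Q [Hk [HQ HkQ]]]].
 set (r0 := ((Cmod x + rho) / 2)%R). assert (Hr0 : 0 <= r0 < rho) by (unfold r0; generalize (Cmod_ge_0 x); lra).
 destruct (cauchyP_bound0 q x y r0 Hq ltac:(unfold r0; lra)) as [C1 [HC1 HP]].
 exists (Q / (kap * kap) * C1 / (1 - r0 / rho))%R. split.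
 { apply Rmult_le_pos. apply Rmult_le_pos; [apply Rmult_le_pos; [lra| apply Rlt_le, Rinv_0_lt_compat; nra]| auto].
   apply Rlt_le, Rinv_0_lt_compat. assert (r0 / rho < 1)%R. apply (Rmult_lt_reg_r rho). lra. unfold Rdiv. rewrite Rmult_assoc, Rinv_l by lra. lra. lra. }
 intros n. unfold hRS. eapply Rle_trans. apply Cmod_csum.
 eapply Rle_trans. apply (rsum_le _ _ (fun k => Q / (kap * kap) * C1 * r0 ^ k)%R).
 { intros k _. rewrite Cmod_mult. rewrite Rmult_assoc. apply Rmult_le_compat; try apply Cmod_ge_0.
   apply qbinom_bound; auto. auto. }
 rewrite rsum_scal. apply Rle_trans with (Q / (kap * kap) * C1 * (rho ^ n / (1 - r0 / rho)))%R.
 apply Rmult_le_compat_l. apply Rmult_le_pos; auto. apply Rmult_le_pos. lra. apply Rlt_le, Rinv_0_lt_compat; nra.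
 apply geom_sum_bound; auto.
 assert (r0 / rho < 1)%R. apply (Rmult_lt_reg_r rho). lra. unfold Rdiv. rewrite Rmult_assoc, Rinv_l by lra. lra.
 right. field. split; lra. Qed.


Definition ser (a : nat -> C) (S : C) : Prop := cvC (fun n => csum n a) S.
Definition csr (a : nat -> C) : C := epsilon (inhabits (RtoC 0)) (fun S => ser a S).

Lemma csr_spec a : (exists S, ser a S) -> ser a (csr a).
Proof. intros H. unfold csr. apply epsilon_spec. auto. Qed.

Lemma csr_unique a S : ser a S -> csr a = S.
Proof. intros H. apply (cvC_unique (fun n => csum n a)). apply csr_spec. eauto. auto. Qed.

Lemma ser_ext a b S : (forall n, a n = b n) -> ser a S -> ser b S.
Proof. intros E H. unfold ser. apply cvC_ext with (fun n => csum n a); auto. intros n. apply csum_ext. intros; auto. Qed.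

Lemma ser_plus a b A B : ser a A -> ser b B -> ser (fun n => a n + b n) (A + B).
Proof. intros. unfold ser. eapply cvC_ext. intros n. symmetry. apply csum_plus. apply cvC_plus; auto. Qed.

Lemma ser_minus a b A B : ser a A -> ser b B -> ser (fun n => a n - b n) (A - B).
Proof. intros. unfold ser. eapply cvC_ext. intros n. symmetry. apply csum_minus. apply cvC_minus; auto. Qed.

Lemma ser_scal c a A : ser a A -> ser (fun n => c * a n) (c * A).
Proof. intros. unfold ser. eapply cvC_ext. intros n. symmetry. apply csum_scal. apply cvC_scal; auto. Qed.

Lemma ser_shift a A : ser a A -> ser (fun n => a (S n)) (A - a O).
Proof. intros H. unfold ser. apply cvC_ext with (fun n => csum (S n) a - a O).
 intros n. rewrite csum_shift. ring. apply cvC_minus. apply (cvC_shift (fun n => csum n a)). auto. apply cvC_const. Qed.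

Lemma ser_unshift a A : ser (fun n => a (S n)) A -> ser a (a O + A).
Proof. intros H. unfold ser. apply cvC_shift_inv. apply cvC_ext with (fun n => a O + csum n (fun k => a (S k))).
 intros n. rewrite csum_shift. auto. apply cvC_plus. apply cvC_const. auto. Qed.

Lemma ser_geom_ex (a : nat -> C) (C0 r : R) :
  0 <= r < 1 -> (forall k, Cmod (a k) <= C0 * r ^ k) -> exists S, ser a S.
Proof. intros. eapply ser_geom; eauto. Qed.

Lemma pick_rho a s : 0 <= a -> 0 <= s -> a * s < 1 -> exists rho, a < rho /\ rho * s < 1.
Proof. intros Ha Hs H. exists (a + (1 - a * s) / (2 * (s + 1)))%R. split.
 assert (0 < (1 - a * s) / (2 * (s + 1)))%R by (apply Rdiv_lt_0_compat; lra). lra.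
 assert (X : ((1 - a * s) / (2 * (s + 1)) * s <= (1 - a * s) / 2)%R).
 { apply (Rmult_le_reg_r (2 * (s + 1))). lra. 
   replace ((1 - a * s) / (2 * (s + 1)) * s * (2 * (s + 1)))%R with ((1 - a * s) * s)%R by (field; lra).
   replace ((1 - a * s) / 2 * (2 * (s + 1)))%R with ((1 - a * s) * (s + 1))%R by field. nra. }
 rewrite Rmult_plus_distr_r. lra. Qed.

Definition qbc (q x y : C) (k : nat) : C := cauchyP q x y k / qpoch q q k.

Lemma qbc_bound q x y z : Cmod q < 1 -> Cmod (x * z) < 1 ->
  exists A r, 0 <= A /\ 0 <= r < 1 /\ forall k, Cmod (qbc q x y k * Cpow z k) <= A * r ^ k.
Proof. intros Hq Hxz. rewrite Cmod_mult in Hxz.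
 destruct (pick_rho (Cmod x) (Cmod z) (Cmod_ge_0 _) (Cmod_ge_0 _) Hxz) as [rho [H1 H2]].
 destruct (cauchyP_bound0 q x y rho Hq H1) as [C0 [HC0 HP]].
 destruct (qq_bounds q Hq) as [kap [Q [Hk [HQ HkQ]]]].
 exists (C0 / kap)%R, (rho * Cmod z)%R. split. apply Rmult_le_pos; auto. apply Rlt_le, Rinv_0_lt_compat; auto.
 split. split. apply Rmult_le_pos. generalize (Cmod_ge_0 x); lra. apply Cmod_ge_0. auto.
 intros k. unfold qbc. rewrite Cmod_mult, Cmod_div by (apply qq_nz; auto). rewrite Cmod_pow.
 rewrite Rpow_mult_distr. specialize (HP k). destruct (HkQ k) as [K1 K2].
 assert (0 <= Cmod z ^ k)%R by (apply pow_le, Cmod_ge_0).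
 assert (Cmod (cauchyP q x y k) / Cmod (qpoch q q k) <= C0 / kap * rho ^ k)%R.
 { unfold Rdiv. apply Rle_trans with (C0 * rho ^ k * / kap)%R.
   apply Rmult_le_compat. apply Cmod_ge_0. apply Rlt_le, Rinv_0_lt_compat; lra. auto.
   apply Rinv_le_contravar; lra. right. ring. }
 replace (C0 / kap * (rho ^ k * Cmod z ^ k))%R with (C0 / kap * rho ^ k * Cmod z ^ k)%R by ring.
 apply Rmult_le_compat_r; auto. Qed.

Lemma qbc_rec q x y j : Cmod q < 1 ->
  qbc q x y (S j) * (1 - Cpow q (S j)) = qbc q x y j * (x - Cpow q j * y).
Proof. intros Hq. unfold qbc. unfold cauchyP at 1. simpl. fold (cauchyP q x y j).
 rewrite qpoch_S. assert (Hn := qq_nz q j Hq). assert (Hn2 := qq_nz q (S j) Hq). rewrite qpoch_S in Hn2.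
 assert (1 - q * Cpow q j <> 0). { intros E. apply Hn2. rewrite E. ring. }
 simpl. field. auto. Qed.

Definition Fq (q x y z : C) : C := csr (fun k => qbc q x y k * Cpow z k).

Lemma Fq_spec q x y z : Cmod q < 1 -> Cmod (x * z) < 1 -> ser (fun k => qbc q x y k * Cpow z k) (Fq q x y z).
Proof. intros Hq Hxz. apply csr_spec. destruct (qbc_bound q x y z Hq Hxz) as [A [r [HA [Hr Hb]]]].
 eapply ser_geom_ex; eauto. Qed.

Lemma Cmod_qz_lt q x z : Cmod q < 1 -> Cmod (x * z) < 1 -> Cmod (x * (q * z)) < 1.
Proof. intros Hq H. rewrite Cmod_mult in *. rewrite Cmod_mult. assert (Hx := Cmod_ge_0 x). assert (Hz := Cmod_ge_0 z).
 assert (Hq0 := Cmod_ge_0 q). nra. Qed.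

Lemma Fq_fe q x y z : Cmod q < 1 -> Cmod (x * z) < 1 ->
  (1 - x * z) * Fq q x y z = (1 - y * z) * Fq q x y (q * z).
Proof. intros Hq Hxz. assert (H1 := Fq_spec q x y z Hq Hxz). assert (H2 := Fq_spec q x y (q * z) Hq (Cmod_qz_lt q x z Hq Hxz)).
 assert (D := ser_minus _ _ _ _ H1 H2). apply ser_shift in D.
 assert (E : ser (fun j => z * (x * (qbc q x y j * Cpow z j) - y * (qbc q x y j * Cpow (q * z) j)))
                 (z * (x * Fq q x y z - y * Fq q x y (q * z)))).
 { apply ser_scal. apply ser_minus; apply ser_scal; auto. }
 assert (X : forall j, qbc q x y (S j) * Cpow z (S j) - qbc q x y (S j) * Cpow (q * z) (S j) =
   z * (x * (qbc q x y j * Cpow z j) - y * (qbc q x y j * Cpow (q * z) j))).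
 { intros j. rewrite Cpow_mult_l. replace (qbc q x y (S j) * Cpow z (S j) - qbc q x y (S j) * (Cpow q (S j) * Cpow z (S j)))
     with (qbc q x y (S j) * (1 - Cpow q (S j)) * Cpow z (S j)) by ring.
   rewrite qbc_rec by auto. rewrite Cpow_mult_l. simpl. ring. }
 assert (E' := ser_ext _ _ _ X D). assert (U := cvC_unique _ _ _ E' E).
 simpl in U. unfold qbc in U. simpl in U.
 assert (U' : Fq q x y z - Fq q x y (q * z) = z * (x * Fq q x y z - y * Fq q x y (q * z))) by (rewrite <- U; ring).
 apply Ceq_minus. replace ((1 - x * z) * Fq q x y z - (1 - y * z) * Fq q x y (q * z)) with
  ((Fq q x y z - Fq q x y (q * z)) - z * (x * Fq q x y z - y * Fq q x y (q * z))) by ring.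
 rewrite U'. ring. Qed.

Lemma Cmod_qnz_lt q x z n : Cmod q < 1 -> Cmod (x * z) < 1 -> Cmod (x * (Cpow q n * z)) < 1.
Proof. intros Hq H. rewrite Cmod_mult in *. rewrite Cmod_mult, Cmod_pow.
 assert (Hx := Cmod_ge_0 x). assert (Hz := Cmod_ge_0 z). assert (Hq0 := Cmod_ge_0 q).
 assert (0 <= Cmod q ^ n <= 1)%R by (split; [apply pow_le; auto| apply pow_le1; lra]).
 assert (0 <= Cmod x * Cmod z)%R by nra. nra. Qed.

Lemma Fq_iter q x y z n : Cmod q < 1 -> Cmod (x * z) < 1 ->
  Fq q x y z * qpoch (x * z) q n = qpoch (y * z) q n * Fq q x y (Cpow q n * z).
Proof. intros Hq Hxz. induction n.
 - unfold qpoch. simpl. replace (RtoC 1 * z) with z by ring. ring.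
 - rewrite !qpoch_S. assert (FE := Fq_fe q x y (Cpow q n * z) Hq (Cmod_qnz_lt q x z n Hq Hxz)).
   replace (Cpow q (S n) * z) with (q * (Cpow q n * z)) by (simpl; ring).
   replace (Fq q x y z * (qpoch (x * z) q n * (1 - x * z * Cpow q n))) with
     ((Fq q x y z * qpoch (x * z) q n) * (1 - x * z * Cpow q n)) by ring.
   rewrite IHn. replace (1 - x * z * Cpow q n) with (1 - x * (Cpow q n * z)) by ring.
   replace (qpoch (y * z) q n * Fq q x y (Cpow q n * z) * (1 - x * (Cpow q n * z))) with
     (qpoch (y * z) q n * ((1 - x * (Cpow q n * z)) * Fq q x y (Cpow q n * z))) by ring.
   rewrite FE. ring. Qed.

Lemma cvR_scal0 c (u : nat -> R) : cvR u 0 -> cvR (fun n => c * u n)%R 0.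
Proof. intros H eps He. destruct (H (eps / (Rabs c + 1))%R) as [N HN]. apply Rdiv_lt_0_compat; auto. generalize (Rabs_pos c); lra.
 exists N. intros n Hn. specialize (HN n Hn). rewrite Rminus_0_r in *. rewrite Rabs_mult.
 assert (0 <= Rabs c) by apply Rabs_pos. assert (0 <= Rabs (u n)) by apply Rabs_pos.
 apply Rle_lt_trans with ((Rabs c + 1) * Rabs (u n))%R. nra.
 apply (Rmult_lt_reg_r (/ (Rabs c + 1))). apply Rinv_0_lt_compat; lra.
 replace ((Rabs c + 1) * Rabs (u n) * / (Rabs c + 1))%R with (Rabs (u n)) by (field; lra). auto. Qed.

Lemma Fq_near q x y z : Cmod q < 1 -> Cmod (x * z) < 1 ->
  cvC (fun n => Fq q x y (Cpow q n * z)) 1.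
Proof. intros Hq Hxz. destruct (qbc_bound q x y z Hq Hxz) as [A [r [HA [Hr Hb]]]].
 assert (Hq0 := Cmod_ge_0 q).
 assert (B : forall n, Cmod (Fq q x y (Cpow q n * z) - 1) <= (Cmod q ^ n * (A / (1 - r)))%R).
 { intros n. assert (S1 := Fq_spec q x y (Cpow q n * z) Hq (Cmod_qnz_lt q x z n Hq Hxz)).
   apply (cvC_le (fun N => csum (S N) (fun k => qbc q x y k * Cpow (Cpow q n * z) k))).
   apply (cvC_shift (fun N => csum N (fun k => qbc q x y k * Cpow (Cpow q n * z) k))). apply S1.
   exists O. intros N _. rewrite csum_shift.
   replace (qbc q x y 0 * Cpow (Cpow q n * z) 0) with (RtoC 1) by (unfold qbc, cauchyP, qpoch; simpl; field; apply C1_nz).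
   replace (1 + csum N (fun k => qbc q x y (S k) * Cpow (Cpow q n * z) (S k)) - 1) with (csum N (fun k => qbc q x y (S k) * Cpow (Cpow q n * z) (S k))) by ring.
   eapply Rle_trans. apply Cmod_csum.
   apply Rle_trans with (rsum N (fun k => Cmod q ^ n * A * r ^ k))%R.
   - apply rsum_le. intros k _. rewrite Cpow_mult_l, Cmult_assoc, (Cmult_comm _ (Cpow (Cpow q n) (S k))), <- Cmult_assoc.
     rewrite Cmod_mult, Cmod_pow, Cmod_pow. rewrite <- pow_mult.
     assert (X1 : (Cmod q ^ (n * S k) <= Cmod q ^ n)%R) by (apply pow_anti; [lra| nia]).
     assert (X2 := Hb (S k)). change (r ^ S k)%R with (r * r ^ k)%R in X2. assert (0 <= r ^ k)%R by (apply pow_le; lra).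
     assert (X3 : (A * (r * r ^ k) <= A * r ^ k)%R) by (apply Rmult_le_compat_l; [auto| nra]).
     rewrite Rmult_assoc. apply Rmult_le_compat. apply pow_le; auto. apply Cmod_ge_0. auto. lra.
   - rewrite rsum_scal. rewrite Rmult_assoc. apply Rmult_le_compat_l. apply pow_le; auto.
     unfold Rdiv. apply Rmult_le_compat_l; auto. apply rsum_geom_le; auto. }
 intros eps He. assert (C := cvR_scal0 (A / (1 - r)) _ (cvR_pow (Cmod q) ltac:(rewrite Rabs_pos_eq; lra)) eps He).
 destruct C as [N HN]. exists N. intros n Hn. specialize (HN n Hn). eapply Rle_lt_trans. apply B.
 rewrite Rminus_0_r in HN. eapply Rle_lt_trans; [|apply HN]. rewrite Rmult_comm. apply Rle_abs. Qed.

Theorem qbinomial q x y z : Cmod q < 1 -> Cmod (x * z) < 1 ->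
  ser (fun k => qbc q x y k * Cpow z k) (qinf (y * z) q / qinf (x * z) q).
Proof. intros Hq Hxz. assert (Hnz : qinf (x * z) q <> 0) by (apply qinf_nz; auto; apply small_nz; auto).
 replace (qinf (y * z) q / qinf (x * z) q) with (Fq q x y z). apply Fq_spec; auto.
 assert (E : Fq q x y z * qinf (x * z) q = qinf (y * z) q * 1).
 { apply (cvC_unique (fun n => Fq q x y z * qpoch (x * z) q n)). apply cvC_scal. apply qinf_spec; auto.
   apply cvC_ext with (fun n => qpoch (y * z) q n * Fq q x y (Cpow q n * z)). intros n. rewrite Fq_iter; auto.
   apply cvC_mult. apply qinf_spec; auto. apply Fq_near; auto. }
 rewrite Cmult_1_r in E. rewrite <- E. field. auto. Qed.


Lemma diag_rows (a : nat -> nat -> C) N :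
  csum N (fun n => csum (S n) (fun i => a i (n - i)%nat)) = csum N (fun i => csum (N - i) (a i)).
Proof. induction N. reflexivity.
 change (csum (S N) (fun n => csum (S n) (fun i => a i (n - i)%nat))) with
   (csum N (fun n => csum (S n) (fun i => a i (n - i)%nat)) + csum (S N) (fun i => a i (N - i)%nat)).
 rewrite IHN. rewrite (csum_ext (S N) (fun i => csum (S N - i) (a i)) (fun i => csum (N - i) (a i) + a i (N - i)%nat)).
 rewrite csum_plus. f_equal. simpl. rewrite Nat.sub_diag. simpl. ring.
 intros k Hk. replace (S N - k)%nat with (S (N - k)) by lia. reflexivity. Qed.

Lemma diag_rows_R (a : nat -> nat -> R) N :
  rsum N (fun n => rsum (S n) (fun i => a i (n - i)%nat)) = rsum N (fun i => rsum (N - i) (a i)).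
Proof. induction N. reflexivity.
 change (rsum (S N) (fun n => rsum (S n) (fun i => a i (n - i)%nat))) with
   (rsum N (fun n => rsum (S n) (fun i => a i (n - i)%nat)) + rsum (S N) (fun i => a i (N - i)%nat))%R.
 rewrite IHN. rewrite (rsum_ext (S N) (fun i => rsum (S N - i) (a i)) (fun i => rsum (N - i) (a i) + a i (N - i)%nat)%R).
 rewrite rsum_plus. f_equal. simpl. rewrite Nat.sub_diag. simpl. ring.
 intros k Hk. replace (S N - k)%nat with (S (N - k)) by lia. reflexivity. Qed.

Lemma rsum_diff_le (m : nat -> R) n k : (forall j, 0 <= m j) -> (k <= n)%nat -> 0 <= rsum n m - rsum k m.
Proof. intros. assert (rsum k m <= rsum n m) by (apply rsum_mono; auto). lra. Qed.

Theorem fubini (a : nat -> nat -> C) (B : R) (r : nat -> C) :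
  (forall I J, rsum I (fun i => rsum J (fun j => Cmod (a i j))) <= B) ->
  (forall i, ser (a i) (r i)) ->
  exists Sm, ser r Sm /\ ser (fun n => csum (S n) (fun i => a i (n - i)%nat)) Sm.
Proof. intros HB Hr. set (m := fun i j => Cmod (a i j)).
 assert (Hm : forall i j, 0 <= m i j) by (intros; apply Cmod_ge_0).
 set (T := fun N => rsum N (fun i => rsum (N - i) (m i))).
 assert (TQ : forall N, T N <= rsum N (fun i => rsum N (m i))).
 { intros N. apply rsum_le. intros i Hi. apply rsum_mono; auto. lia. }
 assert (Tmono : forall N N', (N <= N')%nat -> T N <= T N').
 { intros N N' H. unfold T. apply Rle_trans with (rsum N' (fun i => rsum (N - i) (m i))).
   apply rsum_mono; auto. intros; apply rsum_nonneg; auto. apply rsum_le. intros; apply rsum_mono; auto. lia. }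
 destruct (cvR_mono_bounded T B) as [tau [Htau Htau']]. intros; apply Tmono; lia.
 intros N. eapply Rle_trans. apply TQ. apply HB.
 destruct (ser_dom (fun n => csum (S n) (fun i => a i (n - i)%nat)) (fun n => rsum (S n) (fun i => m i (n - i)%nat)) B) as [Sm HS].
 { intros k. apply Cmod_csum. }
 { intros n. rewrite diag_rows_R. fold (T n). eapply Rle_trans. apply TQ. apply HB. }
 exists Sm. split; auto.
 assert (QT : forall N, rsum N (fun i => rsum N (m i)) <= T (2 * N)%nat).
 { intros N. unfold T. apply Rle_trans with (rsum N (fun i => rsum (2 * N - i) (m i))).
   apply rsum_le. intros; apply rsum_mono; auto. lia. apply rsum_mono. intros; apply rsum_nonneg; auto. lia. }
 assert (C1 : forall N, Cmod (csum N (fun i => csum N (a i)) - csum N (fun n => csum (S n) (fun i => a i (n - i)%nat))) <= T (2 * N)%nat - T N).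
 { intros N. rewrite diag_rows. rewrite <- csum_minus. eapply Rle_trans. apply Cmod_csum.
   apply Rle_trans with (rsum N (fun i => rsum N (m i) - rsum (N - i) (m i)))%R.
   apply rsum_le. intros i Hi. apply csum_diff_bound. intros; apply Rle_refl. lia.
   rewrite (rsum_ext N _ (fun i => rsum N (m i) + (-1) * rsum (N - i) (m i))%R) by (intros; ring).
   rewrite rsum_plus, rsum_scal. fold (T N). specialize (QT N). lra. }
 assert (C2 : forall I J, (I <= J)%nat -> Cmod (csum I (fun i => csum J (a i)) - csum J (fun i => csum J (a i))) <= tau - T I).
 { intros I J H. assert (EQ := csum_add I (J - I) (fun i => csum J (a i))). replace (I + (J - I))%nat with J in EQ by lia. rewrite EQ.
   replace (csum I (fun i => csum J (a i)) - (csum I (fun i => csum J (a i)) + csum (J - I) (fun k => csum J (a (I + k)%nat))))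
     with (- csum (J - I) (fun k => csum J (a (I + k)%nat))) by ring. rewrite Cmod_opp.
   eapply Rle_trans. apply Cmod_csum.
   apply Rle_trans with (rsum (J - I) (fun k => rsum J (m (I + k)%nat))).
   apply rsum_le. intros; apply Cmod_csum.
   assert (E : rsum J (fun i => rsum J (m i)) = (rsum I (fun i => rsum J (m i)) + rsum (J - I) (fun k => rsum J (m (I + k)%nat)))%R).
   { assert (EQ2 := rsum_add I (J - I) (fun i => rsum J (m i))). replace (I + (J - I))%nat with J in EQ2 by lia. rewrite EQ2. auto. }
   assert (F : T I <= rsum I (fun i => rsum J (m i))). { unfold T. apply rsum_le. intros; apply rsum_mono; auto. lia. }
   specialize (QT J). specialize (Htau' (2 * J)%nat). lra. }
 intros eps He.
 destruct (Htau (eps / 4)%R ltac:(lra)) as [I0 HI0].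
 exists I0. intros I HI.
 assert (A1 : tau - T I < eps / 4). { specialize (HI0 I HI). specialize (Htau' I). rewrite Rabs_minus_sym in HI0. rewrite Rabs_pos_eq in HI0 by lra. lra. }
 assert (Fin := cvC_finsum (fun i J => csum J (a i)) r I (fun i _ => Hr i)).
 destruct (Fin (eps / 4)%R ltac:(lra)) as [Na HNa].
 destruct (cvR_cauchy T tau Htau (eps / 4)%R ltac:(lra)) as [N1 HN1].
 destruct (HS (eps / 4)%R ltac:(lra)) as [ND HND].
 set (J := (I + Na + N1 + ND)%nat).
 assert (X1 := HNa J ltac:(unfold J; lia)). simpl in X1.
 assert (X2 := HN1 (2 * J)%nat J ltac:(unfold J; lia) ltac:(unfold J; lia)).
 assert (X3 := HND J ltac:(unfold J; lia)). cbv beta in X3.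
 assert (X4 := C1 J). assert (X5 := C2 I J ltac:(unfold J; lia)).
 assert (Tm : T J <= T (2 * J)%nat) by (apply Tmono; lia).
 rewrite Rabs_pos_eq in X2 by lra.
 set (P := csum I (fun i => csum J (a i))) in *. set (Q := csum J (fun i => csum J (a i))) in *.
 set (D := csum J (fun n => csum (S n) (fun i => a i (n - i)%nat))) in *.
 replace (csum I r - Sm) with (- (P - csum I r) + (P - Q) + (Q - D) + (D - Sm)) by ring.
 eapply Rle_lt_trans. apply Cmod_triangle. eapply Rle_lt_trans. apply Rplus_le_compat_r. apply Cmod_triangle.
 eapply Rle_lt_trans. apply Rplus_le_compat_r. apply Rplus_le_compat_r. apply Cmod_triangle.
 rewrite Cmod_opp. lra. Qed.


Lemma cvC_filterlim u L : cvC u L -> filterlim u eventually (locally L).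
Proof. intros H P [eps HP]. destruct (H eps (cond_pos eps)) as [N HN]. exists N. intros n Hn.
 apply HP. apply C_NormedModule_mixin_compat1. apply HN. lia. Qed.

Lemma sum_n_csum (a : nat -> C) n : sum_n a n = csum (S n) a.
Proof. induction n. rewrite sum_O. simpl. change (a O = 0 + a O). ring.
 rewrite sum_Sn, IHn. reflexivity. Qed.

Lemma ser_is_series a Sm : ser a Sm -> is_series a Sm.
Proof. intros H. unfold is_series. apply filterlim_ext with (fun n => csum (S n) a).
 intros n. symmetry. apply sum_n_csum. apply cvC_filterlim. apply (cvC_shift (fun n => csum n a)). auto. Qed.


Lemma fubini_geom (a : nat -> nat -> C) (C0 r s : R) :
  0 <= C0 -> 0 <= r < 1 -> 0 <= s < 1 -> (forall i j, Cmod (a i j) <= C0 * r ^ i * s ^ j) ->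
  forall I J, rsum I (fun i => rsum J (fun j => Cmod (a i j))) <= C0 * / (1 - r) * / (1 - s).
Proof. intros HC Hr Hs H I J.
 apply Rle_trans with (rsum I (fun i => C0 * r ^ i * / (1 - s)))%R.
 - apply rsum_le. intros i _. apply Rle_trans with (rsum J (fun j => C0 * r ^ i * s ^ j))%R.
   apply rsum_le; intros; apply H. rewrite rsum_scal. apply Rmult_le_compat_l.
   apply Rmult_le_pos; auto; apply pow_le; lra. apply rsum_geom_le; auto.
 - rewrite (rsum_ext I _ (fun i => (C0 * / (1 - s)) * r ^ i)%R) by (intros; ring). rewrite rsum_scal.
   replace (C0 * / (1 - r) * / (1 - s))%R with ((C0 * / (1 - s)) * / (1 - r))%R by ring.
   apply Rmult_le_compat_l. apply Rmult_le_pos; auto. apply Rlt_le, Rinv_0_lt_compat; lra. apply rsum_geom_le; auto. Qed.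

Lemma cauchyP_1_0 q j : cauchyP q 1 0 j = 1.
Proof. induction j. reflexivity. unfold cauchyP in *. simpl. rewrite IHj. ring. Qed.

Lemma qbinom_div q n k : Cmod q < 1 -> (k <= n)%nat ->
  qbinom q n k / qpoch q q n = / (qpoch q q k * qpoch q q (n - k)).
Proof. intros Hq H. unfold qbinom. assert (A := qq_nz q n Hq). assert (B := qq_nz q k Hq). assert (C := qq_nz q (n - k) Hq).
 field. auto. Qed.

Lemma H0_ser q x y t : Cmod q < 1 -> Cmod t < 1 -> Cmod (x * t) < 1 ->
  ser (fun M => hRS q x y M * Cpow t M / qpoch q q M) (qinf (y * t) q / (qinf t q * qinf (x * t) q)).
Proof. intros Hq Ht Hxt.
 assert (Ht' : Cmod (1 * t) < 1) by (rewrite Cmult_1_l; auto).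
 destruct (qbc_bound q x y t Hq Hxt) as [A1 [r1 [HA1 [Hr1 Hb1]]]].
 destruct (qbc_bound q 1 0 t Hq Ht') as [A2 [r2 [HA2 [Hr2 Hb2]]]].
 set (a := fun i j => (qbc q x y i * Cpow t i) * (qbc q 1 0 j * Cpow t j)).
 set (c := qinf (0 * t) q / qinf (1 * t) q).
 destruct (fubini a (A1 * A2 * / (1 - r1) * / (1 - r2))%R (fun i => qbc q x y i * Cpow t i * c)) as [Sm [HS1 HS2]].
 - apply fubini_geom. apply Rmult_le_pos; auto. auto. auto. intros i j. unfold a. rewrite Cmod_mult.
   replace (A1 * A2 * r1 ^ i * r2 ^ j)%R with ((A1 * r1 ^ i) * (A2 * r2 ^ j))%R by ring.
   apply Rmult_le_compat; try apply Cmod_ge_0; auto.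
 - intros i. unfold a. apply ser_scal. apply qbinomial; auto.
 - assert (E1 : ser (fun i => qbc q x y i * Cpow t i * c) (qinf (y * t) q / qinf (x * t) q * c)).
   { apply ser_ext with (fun i => c * (qbc q x y i * Cpow t i)). intros; ring.
     rewrite Cmult_comm. apply ser_scal. apply qbinomial; auto. }
   assert (U := cvC_unique _ _ _ HS1 E1). subst Sm.
   replace (qinf (y * t) q / (qinf t q * qinf (x * t) q)) with (qinf (y * t) q / qinf (x * t) q * c).
   + eapply ser_ext; [|apply HS2]. intros n. cbv beta. unfold a, hRS.
     rewrite (Cmult_comm (csum _ _)). unfold Cdiv. rewrite (Cmult_comm _ (/ qpoch q q n)), Cmult_assoc.
     rewrite <- csum_scal. apply csum_ext. intros k Hk.
     unfold qbc. rewrite cauchyP_1_0. assert (E := qbinom_div q n k Hq ltac:(lia)). unfold Cdiv in E.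
     replace (Cpow t n) with (Cpow t k * Cpow t (n - k)) by (rewrite <- Cpow_add_r; f_equal; lia).
     assert (A := qq_nz q k Hq). assert (B := qq_nz q (n - k) Hq).
     transitivity (cauchyP q x y k * Cpow t k * Cpow t (n - k) * / (qpoch q q k * qpoch q q (n - k))).
     unfold Cdiv. field. split; auto. rewrite <- E. ring.
   + unfold c. replace (0 * t) with (RtoC 0) by ring. rewrite Cmult_1_l, qinf_zero by auto.
     assert (qinf t q <> 0) by (apply qinf_nz; auto; apply small_nz; auto).
     assert (qinf (x * t) q <> 0) by (apply qinf_nz; auto; apply small_nz; auto).
     field. split; auto. Qed.


Definition ee (q x y t : C) (n : nat) : C := qpoch y q n * qpoch (x * t) q n / qpoch (y * t) q n.
Definition gs (q x y t : C) (b : nat) : C := csum (S b) (fun n => Cpow x (b - n) * ee q x y t n / (qpoch q q n * qpoch q q (b - n))).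
Definition Gf (q x y t : C) : C := qinf (y * t) q / (qinf t q * qinf (x * t) q).
Definition hterm (q x y t : C) (b M : nat) : C := hRS q x y (M + b) * Cpow t M / qpoch q q M.
Definition Dom (q x y t : C) := t <> RtoC 0 /\ Cmod t < 1 /\ Cmod (x * t) < 1 /\ forall k, RtoC 1 - (y * t) * Cpow q k <> 0.

Lemma qpoch_qshift a q n : qpoch (a * q) q n * (1 - a) = qpoch a q n * (1 - a * Cpow q n).
Proof. rewrite <- qpoch_S, qpoch_shift1. ring. Qed.

Lemma Dom_q q x y t : 0 < Cmod q -> Cmod q < 1 -> Dom q x y t -> Dom q x y (q * t).
Proof. intros Hq0 Hq [H1 [H2 [H3 H4]]]. split; [|split; [|split]].
 - apply Cmult_neq_0; auto. intros E. rewrite E, Cmod_0 in Hq0. lra.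
 - rewrite Cmod_mult. generalize (Cmod_ge_0 t); nra.
 - apply Cmod_qz_lt; auto.
 - intros k. replace (y * (q * t) * Cpow q k) with (y * t * Cpow q (S k)) by (simpl; ring). auto. Qed.

Lemma one_minus_nz a : Cmod a < 1 -> RtoC 1 - a <> 0.
Proof. intros H E. assert (a = 1) by (apply Ceq_minus in E; rewrite <- E; ring). subst. rewrite Cmod_1 in H. lra. Qed.

Lemma ee_identity q x y t n : Cmod q < 1 -> Dom q x y t ->
  ee q x y t n - (1 - t) * (1 - x * t) / (1 - y * t) * ee q x y (q * t) n =
  t * (x * Cpow q n * ee q x y t n + ee q x y t (S n)).
Proof. intros Hq [H1 [H2 [H3 H4]]].
 assert (Nxt := one_minus_nz _ H3). assert (Nyt : RtoC 1 - y * t <> 0) by (specialize (H4 O); simpl in H4; rewrite Cmult_1_r in H4; auto).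
 assert (Nytn : RtoC 1 - y * t * Cpow q n <> 0) by auto.
 assert (Z : qpoch (y * t) q n <> 0) by (apply qpoch_nz; auto).
 assert (EX : qpoch (x * (q * t)) q n = qpoch (x * t) q n * (1 - x * t * Cpow q n) / (1 - x * t)).
 { replace (x * (q * t)) with (x * t * q) by ring. rewrite <- qpoch_qshift. field. auto. }
 assert (EY : qpoch (y * (q * t)) q n = qpoch (y * t) q n * (1 - y * t * Cpow q n) / (1 - y * t)).
 { replace (y * (q * t)) with (y * t * q) by ring. rewrite <- qpoch_qshift. field. auto. }
 unfold ee. rewrite EX, EY. rewrite !qpoch_S. field. repeat split; auto. Qed.

Lemma gs_identity q x y t b : Cmod q < 1 -> Dom q x y t ->
  gs q x y t b - (1 - t) * (1 - x * t) / (1 - y * t) * gs q x y (q * t) b =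
  t * (1 - q * Cpow q b) * gs q x y t (S b).
Proof. intros Hq HD. assert (HD' := HD). destruct HD' as [H1 [H2 [H3 H4]]].
 assert (Nyt : RtoC 1 - y * t <> 0) by (specialize (H4 O); simpl in H4; rewrite Cmult_1_r in H4; auto).
 set (rho := (1 - t) * (1 - x * t) / (1 - y * t)).
 set (W := fun n m => / (qpoch q q n * qpoch q q m)).
 assert (NW : forall n m, qpoch q q n * qpoch q q m <> 0) by (intros; apply Cmult_neq_0; apply qq_nz; auto).
 transitivity (csum (S b) (fun n => t * (Cpow x (b - n)%nat * Cpow q n * x * ee q x y t n * W n (b - n)%nat
                                          + Cpow x (b - n)%nat * ee q x y t (S n) * W n (b - n)%nat))).
 { unfold gs. rewrite <- csum_scal, <- csum_minus. apply csum_ext. intros n Hn.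
   assert (E := ee_identity q x y t n Hq HD). fold rho in E. unfold W.
   transitivity (Cpow x (b - n)%nat * / (qpoch q q n * qpoch q q (b - n)%nat) * (ee q x y t n - rho * ee q x y (q * t) n)).
   unfold Cdiv. ring. rewrite E. ring. }
 set (term := fun n => Cpow x (S b - n)%nat * ee q x y t n / (qpoch q q n * qpoch q q (S b - n)%nat)).
 set (F1 := fun n => Cpow x (S b - n)%nat * ee q x y t n * Cpow q n * (1 - Cpow q (S b - n)%nat) * W n (S b - n)%nat).
 set (F2 := fun n => Cpow x (S b - n)%nat * ee q x y t n * (1 - Cpow q n) * W n (S b - n)%nat).
 unfold gs at 1. fold term.
 rewrite <- Cmult_assoc, <- (csum_scal _ (1 - q * Cpow q b)).
 rewrite (csum_ext (S (S b)) _ (fun n => F1 n + F2 n)).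
 2:{ intros n Hn. unfold term, F1, F2, W. 
     replace (q * Cpow q b) with (Cpow q n * Cpow q (S b - n)%nat) by (rewrite <- Cpow_add_r; replace (n + (S b - n)%nat)%nat with (S b) by lia; reflexivity).
     unfold Cdiv. ring. }
 rewrite csum_plus. change (csum (S (S b)) F1) with (csum (S b) F1 + F1 (S b)). rewrite (csum_shift (S b) F2).
 replace (F1 (S b)) with (RtoC 0) by (unfold F1; rewrite Nat.sub_diag; simpl; ring).
 replace (F2 O) with (RtoC 0) by (unfold F2; simpl; ring).
 rewrite (csum_ext (S b) F1 (fun n => Cpow x (b - n)%nat * Cpow q n * x * ee q x y t n * W n (b - n)%nat)).
 2:{ intros n Hn. unfold F1, W. replace (S b - n)%nat with (S (b - n)%nat) by lia. rewrite qpoch_S. simpl.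
     assert (A := qq_nz q n Hq). assert (B := qq_nz q (b - n)%nat Hq). assert (C := qq_nz q (S (b - n)%nat) Hq).
     rewrite qpoch_S in C. assert (D : RtoC 1 - q * Cpow q (b - n)%nat <> 0) by (intros E; apply C; rewrite E; ring).
     field. repeat split; auto. }
 rewrite (csum_ext (S b) (fun k => F2 (S k)) (fun n => Cpow x (b - n)%nat * ee q x y t (S n) * W n (b - n)%nat)).
 2:{ intros n Hn. unfold F2, W. replace (S b - S n)%nat with (b - n)%nat by lia. rewrite qpoch_S.
     assert (A := qq_nz q n Hq). assert (B := qq_nz q (b - n)%nat Hq). assert (C := qq_nz q (S n) Hq).
     rewrite qpoch_S in C. assert (D : RtoC 1 - q * Cpow q n <> 0) by (intros E; apply C; rewrite E; ring).
     simpl. field. repeat split; auto. }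
 rewrite Cplus_0_r, Cplus_0_l. rewrite <- csum_plus. rewrite <- csum_scal. apply csum_ext. intros; ring. Qed.

Lemma Gf_q q x y t : 0 < Cmod q -> Cmod q < 1 -> Dom q x y t ->
  Gf q x y (q * t) = Gf q x y t * ((1 - t) * (1 - x * t) / (1 - y * t)).
Proof. intros Hq0 Hq [H1 [H2 [H3 H4]]].
 assert (Nyt : RtoC 1 - y * t <> 0) by (specialize (H4 O); simpl in H4; rewrite Cmult_1_r in H4; auto).
 assert (Nt := one_minus_nz _ H2). assert (Nxt := one_minus_nz _ H3).
 assert (Htq : Cmod (t * q) < 1) by (rewrite Cmod_mult; generalize (Cmod_ge_0 t); nra).
 assert (Hxtq : Cmod (x * t * q) < 1) by (rewrite Cmod_mult; generalize (Cmod_ge_0 (x * t)); nra).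
 assert (N1 : qinf (t * q) q <> 0) by (apply qinf_nz; auto; apply small_nz; auto).
 assert (N2 : qinf (x * t * q) q <> 0) by (apply qinf_nz; auto; apply small_nz; auto).
 unfold Gf. rewrite (qinf_shift1 (y * t)), (qinf_shift1 t), (qinf_shift1 (x * t)) by auto.
 replace (y * (q * t)) with (y * t * q) by ring. replace (x * (q * t)) with (x * t * q) by ring.
 replace (q * t) with (t * q) by ring. field. repeat split; auto. Qed.

Lemma hterm_diff q x y t b M : Cmod q < 1 ->
  hterm q x y t b (S M) - hterm q x y (q * t) b (S M) = t * hterm q x y t (S b) M.
Proof. intros Hq. unfold hterm. replace (S M + b)%nat with (M + S b)%nat by lia.
 rewrite Cpow_mult_l. rewrite qpoch_S. simpl. assert (A := qq_nz q M Hq). assert (C := qq_nz q (S M) Hq).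
 rewrite qpoch_S in C. assert (D : RtoC 1 - q * Cpow q M <> 0) by (intros E; apply C; rewrite E; ring).
 field. split; auto. Qed.

Theorem H_ser q x y : 0 < Cmod q -> Cmod q < 1 -> forall b t, Dom q x y t ->
  ser (hterm q x y t b) (Gf q x y t * (qpoch q q b * gs q x y t b)).
Proof. intros Hq0 Hq b. induction b; intros t HD.
 - destruct HD as [H1 [H2 [H3 H4]]].
   replace (Gf q x y t * (qpoch q q 0 * gs q x y t 0)) with (Gf q x y t).
   eapply ser_ext; [| apply H0_ser; auto]. intros M. unfold hterm. rewrite Nat.add_0_r. auto.
   unfold gs, ee, qpoch. simpl. field.
 - assert (HDq := Dom_q q x y t Hq0 Hq HD).
   assert (A := ser_minus _ _ _ _ (IHb t HD) (IHb (q * t) HDq)). apply ser_shift in A.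
   assert (Z : hterm q x y t b 0 - hterm q x y (q * t) b 0 = 0) by (unfold hterm; simpl; ring).
   rewrite Z in A. rewrite Cminus_0_r in A.
   apply (ser_ext _ (fun M => t * hterm q x y t (S b) M)) in A; [| intros; apply hterm_diff; auto].
   apply (ser_scal (/ t)) in A. destruct HD as [H1 [H2 [H3 H4]]].
   eapply ser_ext in A; [| intros M; cbv beta; rewrite Cmult_assoc, Cinv_l, Cmult_1_l by auto; reflexivity].
   replace (Gf q x y t * (qpoch q q (S b) * gs q x y t (S b))) with
     (/ t * (Gf q x y t * (qpoch q q b * gs q x y t b) - Gf q x y (q * t) * (qpoch q q b * gs q x y (q * t) b))); auto.
   rewrite Gf_q by (auto; split; auto).
   replace (Gf q x y t * (qpoch q q b * gs q x y t b) -
      Gf q x y t * ((1 - t) * (1 - x * t) / (1 - y * t)) * (qpoch q q b * gs q x y (q * t) b)) with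
     (Gf q x y t * qpoch q q b * (gs q x y t b - (1 - t) * (1 - x * t) / (1 - y * t) * gs q x y (q * t) b)) by ring.
   rewrite gs_identity by (auto; split; auto). rewrite qpoch_S. field. auto. Qed.


Lemma cauchyP_split q u v n m : cauchyP q u v (n + m) = cauchyP q u v n * cauchyP q u (v * Cpow q n) m.
Proof. unfold cauchyP. rewrite cprod_add. f_equal. apply cprod_ext. intros k _. rewrite Cpow_add_r. ring. Qed.

Lemma cauchyP_vu (q u v : C) (n : nat) : u <> RtoC 0 -> cauchyP q u v n = qpoch (v / u) q n * Cpow u n.
Proof. intros Hu. induction n. unfold cauchyP, qpoch. simpl. ring. unfold cauchyP in *. simpl. rewrite IHn, qpoch_S. field. auto. Qed.

Lemma ee_bound q x y t : Cmod q < 1 -> Dom q x y t -> exists E, 0 <= E /\ forall n, Cmod (ee q x y t n) <= E.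
Proof. intros Hq [H1 [H2 [H3 H4]]]. destruct (qpoch_lower (y * t) q Hq H4) as [d [Hd Hd']].
 exists (exp (Cmod y / (1 - Cmod q)) * exp (Cmod (x * t) / (1 - Cmod q)) / d)%R. split.
 apply Rmult_le_pos. apply Rmult_le_pos; apply Rlt_le, exp_pos. apply Rlt_le, Rinv_0_lt_compat; auto.
 intros n. unfold ee. rewrite Cmod_div, Cmod_mult by (apply qpoch_nz; auto).
 assert (A := qpoch_upper y q n Hq). assert (B := qpoch_upper (x * t) q n Hq). specialize (Hd' n).
 unfold Rdiv. apply Rmult_le_compat. apply Rmult_le_pos; apply Cmod_ge_0. apply Rlt_le, Rinv_0_lt_compat; lra.
 apply Rmult_le_compat; auto; apply Cmod_ge_0. apply Rinv_le_contravar; auto. Qed.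

Lemma inv_qq_bound q : Cmod q < 1 -> exists kap, 0 < kap /\ forall n, Cmod (/ qpoch q q n) <= / kap.
Proof. intros Hq. destruct (qq_bounds q Hq) as [kap [Q [Hk [HQ H]]]]. exists kap. split; auto.
 intros n. rewrite Cmod_inv by (apply qq_nz; auto). apply Rinv_le_contravar; auto. apply H. Qed.

Lemma ser_finite0 (a : nat -> C) : (forall n, (1 <= n)%nat -> a n = 0) -> ser a (a O).
Proof. intros H eps He. exists 1%nat. intros n Hn. replace (csum n a) with (a O).
 replace (a O - a O) with (RtoC 0) by ring. rewrite Cmod_0. auto.
 destruct n. lia. rewrite csum_shift. rewrite (csum_zero n (fun k => a (S k))). ring. intros k _. apply H. lia. Qed.

Lemma hyp_nz (a q : C) : (forall k, a * Cpow q k <> RtoC 1) -> forall k, RtoC 1 - a * Cpow q k <> 0.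
Proof. intros H k E. apply (H k). apply Ceq_minus in E. rewrite <- E. ring. Qed.

Lemma I3 q x y u v t : 0 < Cmod q -> Cmod q < 1 -> Dom q x y t -> Cmod (u * t) < 1 -> Cmod (u * x * t) < 1 ->
  u <> RtoC 0 -> (forall k, RtoC 1 - v * x * t * Cpow q k <> 0) ->
  exists S, ser (phi32_term y (x * t) (v / u) (y * t) (v * x * t) q (u * t)) S /\
   ser (fun b => cauchyP q u v b * Cpow t b * gs q x y t b) (qinf (v * x * t) q / qinf (u * x * t) q * S).
Proof. intros Hq0 Hq HD Hut Huxt Hu Hv.
 assert (HD' := HD). destruct HD' as [H1 [H2 [H3 H4]]].
 set (A := fun n => cauchyP q u v n * Cpow t n * ee q x y t n / qpoch q q n).
 set (a := fun n m => A n * (qbc q u (v * Cpow q n) m * Cpow (x * t) m)).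
 set (c := qinf (v * x * t) q / qinf (u * x * t) q).
 set (phi := phi32_term y (x * t) (v / u) (y * t) (v * x * t) q (u * t)).
 assert (Huxt' : Cmod (u * (x * t)) < 1) by (rewrite Cmult_assoc; auto).
 assert (Nuxt : qinf (u * x * t) q <> 0) by (apply qinf_nz; auto; apply small_nz; auto).
 assert (Nvxt : qinf (v * x * t) q <> 0) by (apply qinf_nz; auto).
 assert (Nc : c <> 0).
 { unfold c. intros E. apply Nvxt. replace (qinf (v * x * t) q) with (qinf (v * x * t) q / qinf (u * x * t) q * qinf (u * x * t) q) by (field; auto).
   rewrite E. ring. }
 assert (Rows : forall n, ser (a n) (c * phi n)).
 { intros n. assert (B := ser_scal (A n) _ _ (qbinomial q u (v * Cpow q n) (x * t) Hq Huxt')).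
   eapply ser_ext; [| replace (c * phi n) with (A n * (qinf (v * Cpow q n * (x * t)) q / qinf (u * (x * t)) q)); [apply B|]].
   intros m. reflexivity.
   unfold c, phi, A, phi32_term. rewrite (qinf_split (v * x * t) q n Hq).
   replace (v * Cpow q n * (x * t)) with (v * x * t * Cpow q n) by ring. replace (u * (x * t)) with (u * x * t) by ring.
   rewrite cauchyP_vu by auto. unfold ee. rewrite Cpow_mult_l.
   assert (N1 := qq_nz q n Hq). assert (N2 : qpoch (y * t) q n <> 0) by (apply qpoch_nz; auto).
   assert (N3 : qpoch (v * x * t) q n <> 0) by (apply qpoch_nz; auto).
   assert (N4 : qinf (v * x * t * Cpow q n) q <> 0). { intros E. apply Nvxt. rewrite (qinf_split (v * x * t) q n Hq), E. ring. }
   field. repeat split; auto. }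
 destruct (pick_rho (Cmod u) (Cmod t) (Cmod_ge_0 _) (Cmod_ge_0 _) ltac:(rewrite <- Cmod_mult; auto)) as [ra [Hra1 Hra2]].
 destruct (pick_rho (Cmod u) (Cmod (x * t)) (Cmod_ge_0 _) (Cmod_ge_0 _) ltac:(rewrite <- Cmod_mult; auto)) as [rb [Hrb1 Hrb2]].
 destruct (cauchyP_bound0 q u v ra Hq Hra1) as [C2 [HC2 HP2]].
 destruct (cauchyP_bound q u v rb Hq Hrb1) as [C3 [HC3 HP3]].
 destruct (ee_bound q x y t Hq HD) as [E [HE HEb]].
 destruct (inv_qq_bound q Hq) as [kap [Hk Hkb]].
 assert (Hra0 : 0 <= ra) by (generalize (Cmod_ge_0 u); lra). assert (Hrb0 : 0 <= rb) by (generalize (Cmod_ge_0 u); lra).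
 destruct (fubini a (C2 * E * / kap * (C3 * / kap) * / (1 - ra * Cmod t) * / (1 - rb * Cmod (x * t)))%R (fun n => c * phi n)) as [Sm [HS1 HS2]].
 - apply fubini_geom.
   + repeat apply Rmult_le_pos; auto; apply Rlt_le, Rinv_0_lt_compat; auto.
   + split; auto. apply Rmult_le_pos; auto. apply Cmod_ge_0.
   + split; auto. apply Rmult_le_pos; auto. apply Cmod_ge_0.
   + intros n m. unfold a, A, qbc. unfold Cdiv. rewrite !Cmod_mult, !Cmod_pow.
     assert (X1 := HP2 n). assert (X2 := HP3 n m). assert (X3 := HEb n). assert (X4 := Hkb n). assert (X5 := Hkb m).
     rewrite !Rpow_mult_distr.
     assert (P1 : (0 <= Cmod t ^ n)%R) by (apply pow_le, Cmod_ge_0).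
     assert (P2 : (0 <= Cmod (x * t) ^ m)%R) by (apply pow_le, Cmod_ge_0).
     assert (Y1 : (Cmod (cauchyP q u v n) * Cmod t ^ n * Cmod (ee q x y t n) * Cmod (/ qpoch q q n) <= C2 * ra ^ n * Cmod t ^ n * E * / kap)%R).
     { assert (Z0 := Cmod_ge_0 (cauchyP q u v n)). assert (Z1 := Cmod_ge_0 (ee q x y t n)). assert (Z2 := Cmod_ge_0 (/ qpoch q q n)).
       apply Rmult_le_compat; try lra. apply Rmult_le_pos; [apply Rmult_le_pos|]; lra.
       apply Rmult_le_compat; try lra. apply Rmult_le_pos; lra. apply Rmult_le_compat_r; lra. }
     assert (Y2 : (Cmod (cauchyP q u (v * Cpow q n) m) * Cmod (/ qpoch q q m) * Cmod (x * t) ^ m <= C3 * rb ^ m * / kap * Cmod (x * t) ^ m)%R).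
     { assert (Z0 := Cmod_ge_0 (cauchyP q u (v * Cpow q n) m)). assert (Z2 := Cmod_ge_0 (/ qpoch q q m)).
       apply Rmult_le_compat_r; auto. apply Rmult_le_compat; lra. }
     eapply Rle_trans. apply Rmult_le_compat; [| | apply Y1| apply Y2].
     repeat apply Rmult_le_pos; try apply Cmod_ge_0; auto. repeat apply Rmult_le_pos; try apply Cmod_ge_0; auto.
     rewrite Cmod_mult, Rpow_mult_distr. right. ring.
 - exact Rows.
 - exists (Sm / c). split.
   + replace (Sm / c) with (/ c * Sm) by (unfold Cdiv; ring).
     eapply ser_ext; [| apply (ser_scal (/ c) _ _ HS1)]. intros n. cbv beta. field. auto.
   + fold c. replace (c * (Sm / c)) with Sm by (field; auto).
     eapply ser_ext; [| apply HS2]. intros b. cbv beta. unfold gs. rewrite <- csum_scal. apply csum_ext. intros n Hn.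
     unfold a, A, qbc. assert (Esp := cauchyP_split q u v n (b - n)). replace (n + (b - n))%nat with b in Esp by lia.
     rewrite Esp. replace (Cpow t b) with (Cpow t n * Cpow t (b - n)) by (rewrite <- Cpow_add_r; f_equal; lia).
     rewrite Cpow_mult_l. assert (N1 := qq_nz q n Hq). assert (N2 := qq_nz q (b - n) Hq).
     field. split; auto. Qed.


Lemma max_prod_lt a b s : 0 <= a -> 0 <= b -> 0 <= s -> s < 1 -> a * s < 1 -> b * s < 1 -> a * b * s < 1 ->
  Rmax 1 a * Rmax 1 b * s < 1.
Proof. intros. unfold Rmax. destruct (Rle_dec 1 a); destruct (Rle_dec 1 b); lra. Qed.

Lemma I2 q x y u v t Sd : 0 < Cmod q -> Cmod q < 1 -> Dom q x y t -> Cmod (u * t) < 1 -> Cmod (u * x * t) < 1 ->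
  ser (fun b => cauchyP q u v b * Cpow t b * gs q x y t b) Sd ->
  ser (fun n => hRS q x y n * hRS q u v n * Cpow t n / qpoch q q n) (Gf q x y t * Sd).
Proof. intros Hq0 Hq HD Hut Huxt HSd. assert (HD' := HD). destruct HD' as [H1 [H2 [H3 H4]]].
 set (a := fun b M => (cauchyP q u v b * Cpow t b / qpoch q q b) * hterm q x y t b M).
 set (m1 := Rmax 1 (Cmod x)). set (m2 := Rmax 1 (Cmod u)).
 assert (Hm1 : 1 <= m1 /\ Cmod x <= m1) by (split; [apply Rmax_l| apply Rmax_r]).
 assert (Hm2 : 1 <= m2 /\ Cmod u <= m2) by (split; [apply Rmax_l| apply Rmax_r]).
 assert (Hm : m1 * m2 * Cmod t < 1).
 { unfold m1, m2. rewrite (Rmult_comm (Rmax 1 (Cmod x))).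
   assert (G1 := H3). assert (G2 := Hut). assert (G3 := Huxt). rewrite !Cmod_mult in G1, G2, G3.
   rewrite Cmod_mult in G3. apply max_prod_lt; try apply Cmod_ge_0; auto. }
 assert (Ht0 := Cmod_ge_0 t).
 destruct (pick_rho m1 (m2 * Cmod t) ltac:(lra) ltac:(nra) ltac:(nra)) as [r1 [Hr1 Hr1']].
 destruct (pick_rho m2 (r1 * Cmod t) ltac:(lra) ltac:(nra) ltac:(nra)) as [r2 [Hr2 Hr2']].
 destruct (hRS_bound q x y r1 Hq ltac:(lra) ltac:(lra)) as [C1 [HC1 Hh]].
 destruct (cauchyP_bound0 q u v r2 Hq ltac:(lra)) as [C2 [HC2 HP]].
 destruct (inv_qq_bound q Hq) as [kap [Hk Hkb]].
 destruct (fubini a (C2 * / kap * (C1 * / kap) * / (1 - r1 * r2 * Cmod t) * / (1 - r1 * Cmod t))%R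
    (fun b => cauchyP q u v b * Cpow t b / qpoch q q b * (Gf q x y t * (qpoch q q b * gs q x y t b)))) as [Sm [HS1 HS2]].
 - apply fubini_geom.
   + repeat apply Rmult_le_pos; auto; apply Rlt_le, Rinv_0_lt_compat; auto.
   + split. repeat apply Rmult_le_pos; lra. nra.
   + split. apply Rmult_le_pos; lra. nra.
   + intros b M. unfold a, hterm. unfold Cdiv. rewrite !Cmod_mult, !Cmod_pow.
     assert (X1 := HP b). assert (X2 := Hh (M + b)%nat). assert (X4 := Hkb b). assert (X5 := Hkb M).
     assert (P1 : (0 <= Cmod t ^ b)%R) by (apply pow_le; lra). assert (P2 : (0 <= Cmod t ^ M)%R) by (apply pow_le; lra).
     assert (Z0 := Cmod_ge_0 (cauchyP q u v b)). assert (Z1 := Cmod_ge_0 (/ qpoch q q b)).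
     assert (Z2 := Cmod_ge_0 (hRS q x y (M + b))). assert (Z3 := Cmod_ge_0 (/ qpoch q q M)).
     assert (Y1 : (Cmod (cauchyP q u v b) * Cmod t ^ b * Cmod (/ qpoch q q b) <= C2 * r2 ^ b * Cmod t ^ b * / kap)%R).
     { apply Rmult_le_compat; try lra. apply Rmult_le_pos; lra. apply Rmult_le_compat_r; lra. }
     assert (Y2 : (Cmod (hRS q x y (M + b)) * Cmod t ^ M * Cmod (/ qpoch q q M) <= C1 * r1 ^ (M + b) * Cmod t ^ M * / kap)%R).
     { apply Rmult_le_compat; try lra. apply Rmult_le_pos; lra. apply Rmult_le_compat_r; lra. }
     eapply Rle_trans. apply Rmult_le_compat; [| | apply Y1| apply Y2].
     repeat apply Rmult_le_pos; lra. repeat apply Rmult_le_pos; lra.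
     rewrite !Rpow_mult_distr, pow_add. right. ring.
 - intros b. unfold a. apply ser_scal. apply H_ser; auto.
 - assert (E : ser (fun b => cauchyP q u v b * Cpow t b / qpoch q q b * (Gf q x y t * (qpoch q q b * gs q x y t b))) (Gf q x y t * Sd)).
   { eapply ser_ext; [| apply (ser_scal (Gf q x y t) _ _ HSd)]. intros b. cbv beta. assert (N := qq_nz q b Hq). field. auto. }
   assert (U := cvC_unique _ _ _ HS1 E). subst Sm.
   eapply ser_ext; [| apply HS2]. intros N. cbv beta. unfold hRS at 2.
   unfold Cdiv. rewrite (Cmult_comm (hRS q x y N)), <- !Cmult_assoc. rewrite (Cmult_comm (csum _ _)), <- csum_scal.
   apply csum_ext. intros b Hb. unfold a, hterm.
   replace (N - b + b)%nat with N by lia.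
   replace (Cpow t N) with (Cpow t b * Cpow t (N - b)) by (rewrite <- Cpow_add_r; f_equal; lia).
   assert (E2 := qbinom_div q N b Hq ltac:(lia)). unfold Cdiv in E2.
   assert (A1 := qq_nz q b Hq). assert (A2 := qq_nz q (N - b) Hq). assert (A3 := qq_nz q N Hq).
   transitivity (cauchyP q u v b * Cpow t b * Cpow t (N - b) * hRS q x y N * / (qpoch q q b * qpoch q q (N - b))).
   field. split; auto. rewrite <- E2. field. auto. Qed.


Lemma qpoch_zero_arg a q n : a = RtoC 0 -> qpoch a q n = 1.
Proof. intros ->. induction n. reflexivity. rewrite qpoch_S, IHn. ring. Qed.

Lemma is_qpoch_inf_zero a q : a = RtoC 0 -> is_qpoch_inf a q 1.
Proof. intros Ha. unfold is_qpoch_inf. apply cvC_filterlim. apply cvC_ext with (fun _ => RtoC 1).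
 intros n. symmetry. apply qpoch_zero_arg; auto. apply cvC_const. Qed.

Theorem theorem2p1 (q x y u v t : C) :
  (0 < Cmod q)%R -> (Cmod q < 1)%R ->
  (Cmod t < 1)%R -> (Cmod (x * t) < 1)%R -> (Cmod (u * t) < 1)%R ->
  (Cmod (u * x * t) < 1)%R ->
  u <> RtoC 0 ->
  (forall k : nat, y * t * Cpow q k <> RtoC 1) ->
  (forall k : nat, v * x * t * Cpow q k <> RtoC 1) ->
  exists (Pyt Pvxt Pt Pxt Puxt S : C),
    is_qpoch_inf (y * t) q Pyt /\
    is_qpoch_inf (v * x * t) q Pvxt /\
    is_qpoch_inf t q Pt /\
    is_qpoch_inf (x * t) q Pxt /\
    is_qpoch_inf (u * x * t) q Puxt /\
    is_series (phi32_term y (x * t) (v / u) (y * t) (v * x * t) q (u * t)) S /\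
    is_series (fun n => hRS q x y n * hRS q u v n * Cpow t n / qpoch q q n)
      (Pyt * Pvxt / (Pt * Pxt * Puxt) * S).
Proof. intros Hq0 Hq Ht Hxt Hut Huxt Hu Hyt Hvxt.
 destruct (Ceq_dec t 0) as [Ht0|Htn].
 - subst t. exists 1, 1, 1, 1, 1, 1.
   repeat split; try (apply is_qpoch_inf_zero; ring).
   + apply ser_is_series. replace (RtoC 1) with (phi32_term y (x * 0) (v / u) (y * 0) (v * x * 0) q (u * 0) 0).
     apply ser_finite0. intros n Hn. unfold phi32_term. replace (u * 0) with (RtoC 0) by ring.
     destruct n. lia. simpl. ring.
     unfold phi32_term, qpoch. simpl. field.
   + apply ser_is_series. replace (1 * 1 / (1 * 1 * 1) * 1) with (hRS q x y 0 * hRS q u v 0 * Cpow 0 0 / qpoch q q 0).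
     apply ser_finite0. intros n Hn. destruct n. lia. replace (Cpow 0 (S n)) with (RtoC 0) by (simpl; ring). unfold Cdiv. ring.
     unfold hRS, qbinom, cauchyP, qpoch. simpl. field.
 - assert (HD : Dom q x y t) by (split; [auto| split; [auto| split; [auto| apply hyp_nz; auto]]]).
   destruct (I3 q x y u v t Hq0 Hq HD Hut Huxt Hu (hyp_nz _ _ Hvxt)) as [S [HS HSd]].
   assert (L := I2 q x y u v t _ Hq0 Hq HD Hut Huxt HSd).
   exists (qinf (y * t) q), (qinf (v * x * t) q), (qinf t q), (qinf (x * t) q), (qinf (u * x * t) q), S.
   repeat split; try (unfold is_qpoch_inf; apply cvC_filterlim; apply qinf_spec; auto).
   + apply ser_is_series; auto.
   + apply ser_is_series. replace (qinf (y * t) q * qinf (v * x * t) q / (qinf t q * qinf (x * t) q * qinf (u * x * t) q) * S)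
       with (Gf q x y t * (qinf (v * x * t) q / qinf (u * x * t) q * S)); auto.
     assert (N1 : qinf t q <> 0) by (apply qinf_nz; auto; apply small_nz; auto).
     assert (N2 : qinf (x * t) q <> 0) by (apply qinf_nz; auto; apply small_nz; auto).
     assert (N3 : qinf (u * x * t) q <> 0) by (apply qinf_nz; auto; apply small_nz; auto).
     unfold Gf. field. repeat split; auto. Qed.
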